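(* Let $S$ be a semilattice, let $0\le\delta<0.03$, and let $\theta:S\to M_2(\mathbb C)$ be a function (not assumed bounded) satisfying $\sup_{e,f\in S}\|\theta(e)\theta(f)-\theta(ef)\|_{HS}\le\delta$. Then there exists a multiplicative function $\phi:S\to M_2(\mathbb C)$ (i.e. $\phi(ef)=\phi(e)\phi(f)$), taking values in a set of commuting idempotents, such that $\sup_{x\in S}\|\theta(x)-\phi(x)\|_{HS}\le12\delta$. In particular, $(\ell^1(S),M_2(\mathbb C))$ is a uniformly AMNM pair.
   Context: A semilattice is a commutative semigroup in which every element is idempotent. $\|A\|_{HS}=(\operatorname{tr}(A^*A))^{1/2}$ is the Hilbert–Schmidt norm. $\ell^1(S)$ is the convolution algebra of absolutely summable functions on $S$ ($\delta_x*\delta_y=\delta_{xy}$). For a bounded linear $T:A\to B$ between Banach algebras, $\operatorname{def}(T)=\sup\{\|T(xy)-T(x)T(y)\|:\|x\|,\|y\|\le1\}$. $(A,B)$ is a uniformly AMNM pair if for every $\varepsilon>0$ there is $\delta>0$ such that every bounded linear $T:A\to B$ with $\operatorname{def}(T)\le\delta$ is within operator-norm distance $\varepsilon$ of some bounded multiplicative linear map $A\to B$ (here $M_2(\mathbb C)$ may be given any norm). *)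

(* Defs.v *)
From Stdlib Require Import Reals List ClassicalEpsilon.
Import ListNotations.
Open Scope R_scope.

Definition C : Type := (R * R)%type.
Definition C0 : C := (0, 0).
Definition Cadd (z w : C) : C := (fst z + fst w, snd z + snd w).
Definition Copp (z : C) : C := (- fst z, - snd z).
Definition Csub (z w : C) : C := Cadd z (Copp w).
Definition Cmul (z w : C) : C :=
  (fst z * fst w - snd z * snd w, fst z * snd w + snd z * fst w).
Definition Cnorm2 (z : C) : R := fst z * fst z + snd z * snd z.
Definition Cnorm (z : C) : R := sqrt (Cnorm2 z).

Record M2 : Type := mkM2 { m11 : C; m12 : C; m21 : C; m22 : C }.
Definition M0 : M2 := mkM2 C0 C0 C0 C0.
Definition Madd (A B : M2) : M2 :=
  mkM2 (Cadd (m11 A) (m11 B)) (Cadd (m12 A) (m12 B))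
       (Cadd (m21 A) (m21 B)) (Cadd (m22 A) (m22 B)).
Definition Mscale (c : C) (A : M2) : M2 :=
  mkM2 (Cmul c (m11 A)) (Cmul c (m12 A)) (Cmul c (m21 A)) (Cmul c (m22 A)).
Definition Mopp (A : M2) : M2 := Mscale (-1, 0) A.
Definition Msub (A B : M2) : M2 := Madd A (Mopp B).
Definition Mmul (A B : M2) : M2 :=
  mkM2 (Cadd (Cmul (m11 A) (m11 B)) (Cmul (m12 A) (m21 B)))
       (Cadd (Cmul (m11 A) (m12 B)) (Cmul (m12 A) (m22 B)))
       (Cadd (Cmul (m21 A) (m11 B)) (Cmul (m22 A) (m21 B)))
       (Cadd (Cmul (m21 A) (m12 B)) (Cmul (m22 A) (m22 B))).

Definition HS (A : M2) : R :=
  sqrt (Cnorm2 (m11 A) + Cnorm2 (m12 A) + Cnorm2 (m21 A) + Cnorm2 (m22 A)).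

Definition is_norm_M2 (N : M2 -> R) : Prop :=
  (forall A, 0 <= N A) /\
  (forall A, N A = 0 -> A = M0) /\
  (forall A B, N (Madd A B) <= N A + N B) /\
  (forall c A, N (Mscale c A) = Cnorm c * N A).

Definition is_semilattice (S : Type) (op : S -> S -> S) : Prop :=
  (forall x y z, op x (op y z) = op (op x y) z) /\
  (forall x y, op x y = op y x) /\
  (forall x, op x x = x).

(* finite subsets are represented by duplicate-free lists *)
Fixpoint csum_list {I : Type} (f : I -> C) (l : list I) : C :=
  match l with [] => C0 | i :: l' => Cadd (f i) (csum_list f l') end.
Fixpoint rsum_list {I : Type} (f : I -> R) (l : list I) : R :=
  match l with [] => 0 | i :: l' => f i + rsum_list f l' end.

Definition has_sum {I : Type} (f : I -> C) (L : C) : Prop :=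
  forall eps, 0 < eps -> exists l0, NoDup l0 /\
    forall l, NoDup l -> incl l0 l -> Cnorm (Csub (csum_list f l) L) < eps.

Definition usum {I : Type} (f : I -> C) : C :=
  epsilon (inhabits C0) (fun L => has_sum f L).

Definition is_l1 {S : Type} (f : S -> C) : Prop :=
  exists B, forall l, NoDup l -> rsum_list (fun s => Cnorm (f s)) l <= B.

Definition l1norm {S : Type} (f : S -> C) : R :=
  epsilon (inhabits 0)
    (fun L => is_lub (fun r => exists l, NoDup l /\
                         r = rsum_list (fun s => Cnorm (f s)) l) L).

Definition fadd {S : Type} (f g : S -> C) : S -> C := fun s => Cadd (f s) (g s).
Definition fscale {S : Type} (c : C) (f : S -> C) : S -> C := fun s => Cmul c (f s).

(* convolution: (f * g)(s) = sum_{x y = s} f x g y, so delta_x * delta_y = delta_{xy} *)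
Definition conv {S : Type} (op : S -> S -> S) (f g : S -> C) : S -> C :=
  fun s => usum (fun p : S * S =>
    if excluded_middle_informative (op (fst p) (snd p) = s)
    then Cmul (f (fst p)) (g (snd p)) else C0).

Definition bounded_linear {S : Type} (N : M2 -> R) (T : (S -> C) -> M2) : Prop :=
  (forall f g, is_l1 f -> is_l1 g -> T (fadd f g) = Madd (T f) (T g)) /\
  (forall c f, is_l1 f -> T (fscale c f) = Mscale c (T f)) /\
  (exists K, forall f, is_l1 f -> N (T f) <= K * l1norm f).

Definition multiplicative_map {S : Type} (op : S -> S -> S) (T : (S -> C) -> M2) : Prop :=
  forall f g, is_l1 f -> is_l1 g -> T (conv op f g) = Mmul (T f) (T g).

Definition defect_le {S : Type} (op : S -> S -> S) (N : M2 -> R)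
    (T : (S -> C) -> M2) (delta : R) : Prop :=
  forall f g, is_l1 f -> is_l1 g -> l1norm f <= 1 -> l1norm g <= 1 ->
    N (Msub (T (conv op f g)) (Mmul (T f) (T g))) <= delta.

Definition opdist_le {S : Type} (N : M2 -> R) (T psi : (S -> C) -> M2) (eps : R) : Prop :=
  forall f, is_l1 f -> l1norm f <= 1 -> N (Msub (T f) (psi f)) <= eps.

Definition uniformly_AMNM_l1_M2 {S : Type} (op : S -> S -> S) (N : M2 -> R) : Prop :=
  forall eps, 0 < eps -> exists delta, 0 < delta /\
    forall T : (S -> C) -> M2, bounded_linear N T -> defect_le op N T delta ->
      exists psi : (S -> C) -> M2,
        bounded_linear N psi /\ multiplicative_map op psi /\ opdist_le N T psi eps.

(* Main.v *)
From Stdlib Require Import Reals List Permutation ClassicalEpsilon Classical FunctionalExtensionality Lra Lia Psatz Ring Field.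
From Coquelicot Require Import Compactness.
Require Import Defs.
Import ListNotations.
Open Scope R_scope.

Definition C1 : C := (1, 0).

Lemma Ceq (z w : C) : fst z = fst w -> snd z = snd w -> z = w.
Proof. destruct z, w; simpl; intros; subst; reflexivity. Qed.

Lemma Cring_theory : ring_theory C0 C1 Cadd Cmul Csub Copp (@eq C).
Proof.
  constructor; intros; apply Ceq; unfold Cadd, Cmul, Csub, Copp, C0, C1; simpl; ring.
Qed.
Add Ring Cring : Cring_theory.

Lemma Cnorm2_nonneg z : 0 <= Cnorm2 z.
Proof. unfold Cnorm2; nra. Qed.
Lemma Cnorm2_mul z w : Cnorm2 (Cmul z w) = Cnorm2 z * Cnorm2 w.
Proof. unfold Cnorm2, Cmul; simpl; ring. Qed.
Lemma Cnorm_nonneg z : 0 <= Cnorm z.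
Proof. apply sqrt_pos. Qed.
Lemma Cnorm_sq z : Cnorm z * Cnorm z = Cnorm2 z.
Proof. unfold Cnorm; rewrite sqrt_sqrt; auto using Cnorm2_nonneg. Qed.
Lemma Cnorm_mul z w : Cnorm (Cmul z w) = Cnorm z * Cnorm w.
Proof. unfold Cnorm; rewrite Cnorm2_mul, sqrt_mult; auto using Cnorm2_nonneg. Qed.
Lemma Cnorm_opp z : Cnorm (Copp z) = Cnorm z.
Proof. unfold Cnorm, Cnorm2, Copp; simpl; f_equal; ring. Qed.
Lemma Cnorm_real r : Cnorm (r, 0) = Rabs r.
Proof. unfold Cnorm, Cnorm2; simpl. replace (r*r+0*0) with (r*r) by ring.
  apply sqrt_Rsqr_abs. Qed.
Lemma Cnorm_C0 : Cnorm C0 = 0.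
Proof. unfold Cnorm, Cnorm2, C0; simpl. replace (0*0+0*0) with 0 by ring. apply sqrt_0. Qed.
Lemma Cnorm_C1 : Cnorm C1 = 1.
Proof. unfold C1. rewrite Cnorm_real. apply Rabs_R1. Qed.

Lemma sqrt_le_sq a b : 0 <= b -> a <= b * b -> sqrt a <= b.
Proof. intros Hb H. rewrite <- (sqrt_square b) by auto. apply sqrt_le_1_alt. lra. Qed.

Lemma sq_le u v : 0 <= v -> u*u <= v*v -> u <= v.
Proof. intros. nra. Qed.
Lemma sq_mono u v : 0 <= u -> u <= v -> u*u <= v*v.
Proof. intros. nra. Qed.

Lemma Cnorm_triangle z w : Cnorm (Cadd z w) <= Cnorm z + Cnorm w.
Proof.
  apply sqrt_le_sq. pose proof (Cnorm_nonneg z); pose proof (Cnorm_nonneg w); lra.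
  destruct z as [a b], w as [c d]. unfold Cnorm2, Cadd; simpl.
  pose proof (Cnorm_sq (a,b)) as E1; pose proof (Cnorm_sq (c,d)) as E2.
  unfold Cnorm2 in E1, E2; simpl in E1, E2.
  pose proof (Cnorm_nonneg (a,b)); pose proof (Cnorm_nonneg (c,d)).
  set (x := Cnorm (a,b)) in *. set (y := Cnorm (c,d)) in *.
  assert (a*c + b*d <= x*y).
  { assert ((a*c+b*d)*(a*c+b*d) <= (x*y)*(x*y)).
    { replace ((x*y)*(x*y)) with ((x*x)*(y*y)) by ring. rewrite E1, E2.
      pose proof (Rle_0_sqr (a*d-b*c)); unfold Rsqr in *; nra. }
    apply sq_le; auto. apply Rmult_le_pos; auto. }
  nra.
Qed.

Lemma Cnorm_sub_sym z w : Cnorm (Csub z w) = Cnorm (Csub w z).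
Proof. replace (Csub z w) with (Copp (Csub w z)) by ring. apply Cnorm_opp. Qed.

Lemma Cnorm_triangle_sub z w : Cnorm z - Cnorm w <= Cnorm (Csub z w).
Proof. pose proof (Cnorm_triangle (Csub z w) w). replace (Cadd (Csub z w) w) with z in H by ring. lra. Qed.

Lemma Cnorm_eq0 z : Cnorm z = 0 -> z = C0.
Proof. intro H. assert (Cnorm2 z = 0). { rewrite <- Cnorm_sq, H; ring. }
  destruct z as [a b]; unfold Cnorm2 in H0; simpl in H0. apply Ceq; simpl; nra. Qed.

Definition MI : M2 := mkM2 C1 C0 C0 C1.
Lemma M2eq (A B : M2) : m11 A = m11 B -> m12 A = m12 B -> m21 A = m21 B -> m22 A = m22 B -> A = B.
Proof. destruct A, B; simpl; intros; subst; reflexivity. Qed.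

Lemma Cm1 : ((-1,0) : C) = Copp C1.
Proof. apply Ceq; simpl; ring. Qed.

Ltac meq := repeat match goal with A : M2 |- _ => destruct A end;
  apply M2eq; unfold Madd, Msub, Mopp, Mscale, Mmul, MI, M0; rewrite ?Cm1; simpl; ring.

Definition tr (A : M2) : C := Cadd (m11 A) (m22 A).
Definition det (A : M2) : C := Csub (Cmul (m11 A) (m22 A)) (Cmul (m12 A) (m21 A)).

Lemma Mmul_assoc A B D : Mmul A (Mmul B D) = Mmul (Mmul A B) D.
Proof. meq. Qed.
Lemma cayley A : Mmul A A = Madd (Mscale (tr A) A) (Mscale (Copp (det A)) MI).
Proof. unfold tr, det; meq. Qed.

Definition HS2 (A : M2) : R :=
  Cnorm2 (m11 A) + Cnorm2 (m12 A) + Cnorm2 (m21 A) + Cnorm2 (m22 A).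
Lemma HS2_nonneg A : 0 <= HS2 A.
Proof. unfold HS2; pose proof (Cnorm2_nonneg (m11 A)); pose proof (Cnorm2_nonneg (m12 A));
  pose proof (Cnorm2_nonneg (m21 A)); pose proof (Cnorm2_nonneg (m22 A)); lra. Qed.
Lemma HS_nonneg A : 0 <= HS A.
Proof. apply sqrt_pos. Qed.
Lemma HS_sq A : HS A * HS A = HS2 A.
Proof. unfold HS. rewrite sqrt_sqrt. reflexivity. apply HS2_nonneg. Qed.

Lemma HS_expand A : HS A = sqrt (Cnorm (m11 A) * Cnorm (m11 A) + Cnorm (m12 A) * Cnorm (m12 A)
   + Cnorm (m21 A) * Cnorm (m21 A) + Cnorm (m22 A) * Cnorm (m22 A)).
Proof. unfold HS. rewrite !Cnorm_sq. reflexivity. Qed.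
Lemma HS2_expand A : HS2 A = Cnorm (m11 A) * Cnorm (m11 A) + Cnorm (m12 A) * Cnorm (m12 A)
   + Cnorm (m21 A) * Cnorm (m21 A) + Cnorm (m22 A) * Cnorm (m22 A).
Proof. unfold HS2; rewrite !Cnorm_sq; reflexivity. Qed.

Lemma HS_scale c A : HS (Mscale c A) = Cnorm c * HS A.
Proof. unfold HS. rewrite <- (sqrt_Rsqr (Cnorm c)) by apply Cnorm_nonneg.
  rewrite <- sqrt_mult. f_equal. unfold Rsqr. rewrite Cnorm_sq. unfold HS2. destruct A; simpl.
  rewrite !Cnorm2_mul. ring. apply Rle_0_sqr. apply HS2_nonneg. Qed.

Lemma minkowski4 x1 x2 x3 x4 y1 y2 y3 y4 :
  sqrt ((x1+y1)*(x1+y1) + (x2+y2)*(x2+y2) + (x3+y3)*(x3+y3) + (x4+y4)*(x4+y4))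
  <= sqrt (x1*x1+x2*x2+x3*x3+x4*x4) + sqrt (y1*y1+y2*y2+y3*y3+y4*y4).
Proof.
  set (X := x1*x1+x2*x2+x3*x3+x4*x4). set (Y := y1*y1+y2*y2+y3*y3+y4*y4).
  assert (HX : 0 <= X) by (unfold X; nra). assert (HY : 0 <= Y) by (unfold Y; nra).
  pose proof (sqrt_pos X); pose proof (sqrt_pos Y).
  apply sqrt_le_sq. lra.
  assert (x1*y1+x2*y2+x3*y3+x4*y4 <= sqrt X * sqrt Y).
  { rewrite <- sqrt_mult by auto. apply Rsqr_incr_0_var.
    rewrite Rsqr_sqrt by (apply Rmult_le_pos; auto). unfold Rsqr, X, Y.
    assert (forall p q r s : R, 0 <= (p*q-r*s)*(p*q-r*s)) by (intros; apply Rle_0_sqr).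
    pose proof (H1 x1 y2 x2 y1); pose proof (H1 x1 y3 x3 y1); pose proof (H1 x1 y4 x4 y1);
    pose proof (H1 x2 y3 x3 y2); pose proof (H1 x2 y4 x4 y2); pose proof (H1 x3 y4 x4 y3).
    lra. apply sqrt_pos. }
  assert (sqrt X * sqrt X = X) by (apply sqrt_sqrt; auto).
  assert (sqrt Y * sqrt Y = Y) by (apply sqrt_sqrt; auto).
  unfold X, Y in *. nra.
Qed.

Lemma HS_triangle A B : HS (Madd A B) <= HS A + HS B.
Proof.
  rewrite (HS_expand (Madd A B)), (HS_expand A), (HS_expand B).
  eapply Rle_trans; [| apply minkowski4].
  apply sqrt_le_1_alt. destruct A, B; unfold Madd; simpl.
  repeat match goal with |- context [Cnorm (Cadd ?z ?w)] =>
    let H := fresh in pose proof (Cnorm_triangle z w) as H;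
    pose proof (Cnorm_nonneg (Cadd z w));
    apply sq_mono in H; [|apply Cnorm_nonneg];
    set (Cnorm (Cadd z w)) in * end.
  lra.
Qed.

Lemma cs2 a b c d : (a*c+b*d)*(a*c+b*d) <= (a*a+b*b)*(c*c+d*d).
Proof. pose proof (Rle_0_sqr (a*d-b*c)); unfold Rsqr in *; nra. Qed.

Lemma Cnorm_dot a b c d : Cnorm (Cadd (Cmul a c) (Cmul b d)) <= Cnorm a * Cnorm c + Cnorm b * Cnorm d.
Proof. eapply Rle_trans. apply Cnorm_triangle. rewrite !Cnorm_mul. lra. Qed.

Lemma HS_mul A B : HS (Mmul A B) <= HS A * HS B.
Proof.
  rewrite (HS_expand (Mmul A B)), (HS_expand A), (HS_expand B).
  rewrite <- sqrt_mult.
  2:{ pose proof (Cnorm_nonneg (m11 A)); pose proof (Cnorm_nonneg (m12 A));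
      pose proof (Cnorm_nonneg (m21 A)); pose proof (Cnorm_nonneg (m22 A)); nra. }
  2:{ pose proof (Cnorm_nonneg (m11 B)); pose proof (Cnorm_nonneg (m12 B));
      pose proof (Cnorm_nonneg (m21 B)); pose proof (Cnorm_nonneg (m22 B)); nra. }
  apply sqrt_le_1_alt. destruct A as [a1 a2 a3 a4], B as [b1 b2 b3 b4]; unfold Mmul; simpl.
  pose proof (Cnorm_dot a1 a2 b1 b3) as H1; pose proof (Cnorm_dot a1 a2 b2 b4) as H2;
  pose proof (Cnorm_dot a3 a4 b1 b3) as H3; pose proof (Cnorm_dot a3 a4 b2 b4) as H4.
  apply sq_mono in H1; [|apply Cnorm_nonneg]. apply sq_mono in H2; [|apply Cnorm_nonneg].
  apply sq_mono in H3; [|apply Cnorm_nonneg]. apply sq_mono in H4; [|apply Cnorm_nonneg].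
  pose proof (cs2 (Cnorm a1) (Cnorm a2) (Cnorm b1) (Cnorm b3)).
  pose proof (cs2 (Cnorm a1) (Cnorm a2) (Cnorm b2) (Cnorm b4)).
  pose proof (cs2 (Cnorm a3) (Cnorm a4) (Cnorm b1) (Cnorm b3)).
  pose proof (cs2 (Cnorm a3) (Cnorm a4) (Cnorm b2) (Cnorm b4)).
  lra.
Qed.

Definition s2 := 1.4143.

Lemma sqrt2_le : sqrt 2 <= s2.
Proof. apply sqrt_le_sq; unfold s2; lra. Qed.

Ltac cnn := repeat match goal with |- context [Cnorm ?z] =>
   let H := fresh "cn" in assert (H := Cnorm_nonneg z); set (Cnorm z) in * end.
Lemma sum_sq_le p q : (p+q)*(p+q) <= 2*(p*p+q*q).
Proof. pose proof (Rle_0_sqr (p-q)); unfold Rsqr in *; nra. Qed.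

Lemma Cnorm_tr A : Cnorm (tr A) <= s2 * HS A.
Proof.
  unfold tr. eapply Rle_trans. apply Cnorm_triangle.
  pose proof (HS_nonneg A).
  apply sq_le. unfold s2; nra.
  replace (s2 * HS A * (s2 * HS A)) with (s2*s2*(HS A * HS A)) by ring.
  rewrite HS_sq, HS2_expand. 
  pose proof (sum_sq_le (Cnorm (m11 A)) (Cnorm (m22 A))).
  pose proof (Rle_0_sqr (Cnorm (m12 A))). pose proof (Rle_0_sqr (Cnorm (m21 A))).
  pose proof (Rle_0_sqr (Cnorm (m11 A))). pose proof (Rle_0_sqr (Cnorm (m22 A))).
  unfold Rsqr, s2 in *. nra.
Qed.

Lemma Cnorm_det A : Cnorm (det A) <= HS A * HS A / 2.
Proof.
  unfold det, Csub. eapply Rle_trans. apply Cnorm_triangle. rewrite Cnorm_opp, !Cnorm_mul.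
  rewrite HS_sq, HS2_expand.
  pose proof (Rle_0_sqr (Cnorm (m11 A) - Cnorm (m22 A))). pose proof (Rle_0_sqr (Cnorm (m12 A) - Cnorm (m21 A))).
  unfold Rsqr in *. nra.
Qed.

Lemma Cnorm_m1 : Cnorm (-1,0) = 1.
Proof. rewrite Cnorm_real. rewrite Rabs_left by lra. ring. Qed.

Lemma HS_sub_sym A B : HS (Msub A B) = HS (Msub B A).
Proof. replace (Msub A B) with (Mscale (-1,0) (Msub B A)) by meq.
  rewrite HS_scale, Cnorm_m1; ring. Qed.

Lemma HS_MI : HS MI <= s2.
Proof. unfold HS, HS2, MI, C1, C0, Cnorm2; simpl. apply sqrt_le_sq; unfold s2; lra. Qed.

Lemma HS_M0 : HS M0 = 0.
Proof. assert (HS2 M0 = 0) by (unfold HS2, M0, C0, Cnorm2; simpl; ring).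
  unfold HS. fold (HS2 M0). rewrite H. apply sqrt_0. Qed.

Lemma HS_tri3 A B : HS (Msub A B) <= HS A + HS B.
Proof. unfold Msub. eapply Rle_trans. apply HS_triangle. unfold Mopp. rewrite HS_scale, Cnorm_m1. lra. Qed.

Lemma HS_sub_tri A B D : HS (Msub A D) <= HS (Msub A B) + HS (Msub B D).
Proof. replace (Msub A D) with (Madd (Msub A B) (Msub B D)) by meq. apply HS_triangle. Qed.

Lemma HS_scaleI d : HS (Mscale d MI) <= s2 * Cnorm d.
Proof. rewrite HS_scale. pose proof HS_MI. pose proof (Cnorm_nonneg d). nra. Qed.

Lemma Cnorm_double z : Cnorm (Cadd z z) = 2 * Cnorm z.
Proof. replace (Cadd z z) with (Cmul (2,0) z) by (apply Ceq; simpl; ring).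
  rewrite Cnorm_mul, Cnorm_real, Rabs_right by lra. ring. Qed.

Ltac cunf := unfold tr, det, Msub, Madd, Mopp, Mscale, Mmul, MI; rewrite ?Cm1; simpl; ring.

Lemma ni_tr B : Cadd (det B) (det B) = Csub (Csub (Cmul (tr B) (tr B)) (tr B)) (tr (Msub (Mmul B B) B)).
Proof. destruct B; cunf. Qed.
Lemma ni_det B : det (Msub (Mmul B B) B) = Cmul (det B) (Cadd (Csub C1 (tr B)) (det B)).
Proof. destruct B; cunf. Qed.
Lemma ni_lin B : Mscale (Csub (tr B) C1) B = Madd (Msub (Mmul B B) B) (Mscale (det B) MI).
Proof. destruct B; apply M2eq; cunf. Qed.
Lemma ni_t B : Cmul (tr B) (Csub (tr B) C1) = Cadd (tr (Msub (Mmul B B) B)) (Cadd (det B) (det B)).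
Proof. destruct B; cunf. Qed.

Lemma Cnorm_sub_C1_ge t : 1 - Cnorm t <= Cnorm (Csub t C1).
Proof. rewrite Cnorm_sub_sym. pose proof (Cnorm_triangle_sub C1 t). rewrite Cnorm_C1 in H. lra. Qed.

Lemma L0 (B : M2) (eta r : R) :
  HS (Msub (Mmul B B) B) <= eta -> Cnorm (tr B) <= r -> 0 <= eta -> 0 <= r < 1 ->
  0 < 1 - r - (r*r + r + s2*eta)/2 ->
  HS B * (1 - r) <= eta + s2 * (eta*eta/(2*(1 - r - (r*r + r + s2*eta)/2))) /\
  Cnorm (tr B) * (1 - r) <= s2*eta + eta*eta/(1 - r - (r*r + r + s2*eta)/2).
Proof.
  intros HD Ht He Hr Hg.
  set (g := 1 - r - (r*r + r + s2*eta)/2) in *.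
  set (D := Msub (Mmul B B) B) in *.
  pose proof (ni_tr B) as E1. pose proof (ni_det B) as E2. pose proof (ni_lin B) as E3.
  pose proof (ni_t B) as E4. fold D in E1, E2, E3, E4.
  set (t := tr B) in *. set (d := det B) in *.
  assert (Htau : Cnorm (tr D) <= s2 * eta).
  { eapply Rle_trans. apply Cnorm_tr. unfold s2 in *; nra. }
  assert (HdD : Cnorm (det D) <= eta*eta/2).
  { eapply Rle_trans. apply Cnorm_det. pose proof (HS_nonneg D). nra. }
  assert (H2d : 2 * Cnorm d <= r*r + r + s2*eta).
  { rewrite <- Cnorm_double, E1. unfold Csub.
    eapply Rle_trans. apply Cnorm_triangle. rewrite Cnorm_opp.
    eapply Rle_trans. apply Rplus_le_compat_r. apply Cnorm_triangle.
    rewrite Cnorm_opp, Cnorm_mul. pose proof (Cnorm_nonneg t). nra. }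
  assert (Hg2 : g <= Cnorm (Cadd (Csub C1 t) d)).
  { pose proof (Cnorm_triangle_sub (Csub C1 t) (Copp d)).
    replace (Csub (Csub C1 t) (Copp d)) with (Cadd (Csub C1 t) d) in H by ring.
    rewrite Cnorm_opp in H. pose proof (Cnorm_sub_C1_ge t). rewrite Cnorm_sub_sym in H0.
    unfold g. lra. }
  assert (Hd : Cnorm d <= eta*eta/(2*g)).
  { apply Rmult_le_reg_r with (2*g). lra.
    unfold Rdiv. rewrite Rmult_assoc, Rinv_l by lra. rewrite Rmult_1_r.
    assert (Cnorm d * Cnorm (Cadd (Csub C1 t) d) <= eta*eta/2) by (rewrite <- Cnorm_mul, <- E2; auto).
    pose proof (Cnorm_nonneg d). nra. }
  assert (Ht1 : 1 - r <= Cnorm (Csub t C1)) by (pose proof (Cnorm_sub_C1_ge t); lra).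
  split.
  - assert (HS (Mscale (Csub t C1) B) <= eta + s2 * Cnorm d).
    { rewrite E3. eapply Rle_trans. apply HS_triangle. pose proof (HS_scaleI d). lra. }
    rewrite HS_scale in H. pose proof (HS_nonneg B).
    assert (HS B * (1 - r) <= Cnorm (Csub t C1) * HS B) by nra.
    unfold s2 in *. pose proof (Cnorm_nonneg d). nra.
  - assert (Cnorm t * Cnorm (Csub t C1) <= s2*eta + 2 * Cnorm d).
    { rewrite <- Cnorm_mul, E4, <- Cnorm_double. eapply Rle_trans. apply Cnorm_triangle. lra. }
    assert (2 * Cnorm d <= eta*eta/g).
    { replace (eta*eta/g) with (2*(eta*eta/(2*g))) by (field; lra). lra. }
    pose proof (Cnorm_nonneg t). nra.
Qed.

(* the quartic constraint on the trace *)
Lemma ni_quartic B :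
  Cmul (Cmul (Csub (tr B) C1) (Csub (tr B) C1))
       (Csub (Cmul (tr B) (Csub (tr B) (Cadd C1 C1))) (Cadd (tr (Msub (Mmul B B) B)) (tr (Msub (Mmul B B) B))))
   = Csub (Cadd (Cadd (det (Msub (Mmul B B) B)) (det (Msub (Mmul B B) B)))
                (Cadd (det (Msub (Mmul B B) B)) (det (Msub (Mmul B B) B))))
          (Cmul (tr (Msub (Mmul B B) B)) (tr (Msub (Mmul B B) B))).
Proof. destruct B; cunf. Qed.

Lemma Qlem (B : M2) (eta : R) :
  HS (Msub (Mmul B B) B) <= eta -> 0 <= eta ->
  Cnorm (Csub (tr B) C1) * Cnorm (Csub (tr B) C1) *
    (Cnorm (tr B) * Cnorm (Csub (tr B) (Cadd C1 C1)) - 2 * s2 * eta) <= 2*eta*eta + s2*s2*eta*eta.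
Proof.
  intros HD He. pose proof (ni_quartic B) as E.
  set (D := Msub (Mmul B B) B) in *. set (t := tr B) in *.
  assert (Htau : Cnorm (tr D) <= s2 * eta).
  { eapply Rle_trans. apply Cnorm_tr. unfold s2 in *; nra. }
  assert (HdD : Cnorm (det D) <= eta*eta/2).
  { eapply Rle_trans. apply Cnorm_det. pose proof (HS_nonneg D). nra. }
  apply (f_equal Cnorm) in E. rewrite !Cnorm_mul in E.
  assert (Cnorm (Csub (Cadd (Cadd (det D) (det D)) (Cadd (det D) (det D))) (Cmul (tr D) (tr D)))
     <= 2*eta*eta + s2*s2*eta*eta).
  { unfold Csub. eapply Rle_trans. apply Cnorm_triangle. rewrite Cnorm_opp, Cnorm_mul, !Cnorm_double.
    pose proof (Cnorm_nonneg (tr D)). nra. }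
  assert (Cnorm (Cmul t (Csub t (Cadd C1 C1))) - 2 * s2 * eta <=
          Cnorm (Csub (Cmul t (Csub t (Cadd C1 C1))) (Cadd (tr D) (tr D)))).
  { pose proof (Cnorm_triangle_sub (Cmul t (Csub t (Cadd C1 C1))) (Cadd (tr D) (tr D))).
    rewrite Cnorm_double in H0. lra. }
  rewrite Cnorm_mul in H0.
  pose proof (Cnorm_nonneg (Csub t C1)).
  assert (0 <= Cnorm (Csub t C1) * Cnorm (Csub t C1)) by nra.
  nra.
Qed.

Definition cr (a : R) : C := (a, 0).

Lemma cr_dist t a b : Rabs (a - b) - Cnorm (Csub t (cr b)) <= Cnorm (Csub t (cr a)).
Proof.
  pose proof (Cnorm_triangle (Csub t (cr a)) (Copp (Csub t (cr b)))).
  replace (Cadd (Csub t (cr a)) (Copp (Csub t (cr b)))) with (cr (b - a)) in H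
    by (apply Ceq; unfold cr; simpl; ring).
  assert (Cnorm (cr (b - a)) = Rabs (b - a)) by apply Cnorm_real.
  rewrite H0, Cnorm_opp in H. rewrite Rabs_minus_sym in H. lra.
Qed.

Lemma C1_cr : C1 = cr 1. Proof. reflexivity. Qed.
Lemma C2_cr : Cadd C1 C1 = cr 2. Proof. apply Ceq; unfold cr; simpl; ring. Qed.

Lemma L0n (B : M2) (eta r g0 K Kt : R) :
  HS (Msub (Mmul B B) B) <= eta -> Cnorm (tr B) <= r -> 0 <= eta -> 0 <= r -> r < 1 ->
  0 < g0 -> g0 <= 1 - r - (r*r + r + s2*eta)/2 ->
  eta + s2 * (eta*eta/(2*g0)) <= K * (1 - r) ->
  s2*eta + eta*eta/g0 <= Kt * (1 - r) ->
  HS B <= K /\ Cnorm (tr B) <= Kt.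
Proof.
  intros HD Ht He Hr Hr1 Hg0 Hg HK HKt.
  destruct (L0 B eta r HD Ht He (conj Hr Hr1)) as [H1 H2]. lra.
  set (g := 1 - r - (r*r + r + s2*eta)/2) in *.
  assert (eta*eta/(2*g) <= eta*eta/(2*g0)).
  { unfold Rdiv. apply Rmult_le_compat_l. nra. apply Rinv_le_contravar; lra. }
  assert (eta*eta/g <= eta*eta/g0).
  { unfold Rdiv. apply Rmult_le_compat_l. nra. apply Rinv_le_contravar; lra. }
  split.
  - apply Rmult_le_reg_r with (1 - r). lra. unfold s2 in *. nra.
  - apply Rmult_le_reg_r with (1 - r). lra. unfold s2 in *. nra.
Qed.

Definition Hyp (S : Type) (op : S -> S -> S) (th : S -> M2) (dl : R) : Prop :=
  is_semilattice S op /\ 0 <= dl /\ dl < 0.03 /\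
  forall e f, HS (Msub (Mmul (th e) (th f)) (th (op e f))) <= dl.

Lemma Hyp_err {S op th dl} : Hyp S op th dl -> forall e f, HS (Msub (Mmul (th e) (th f)) (th (op e f))) <= dl.
Proof. intros [_ [_ [_ H]]]; exact H. Qed.
Lemma Hyp_d0 {S op th dl} : Hyp S op th dl -> 0 <= dl.
Proof. intros [_ [H _]]; exact H. Qed.
Lemma Hyp_d1 {S op th dl} : Hyp S op th dl -> dl < 0.03.
Proof. intros [_ [_ [H _]]]; exact H. Qed.
Lemma Hyp_idem {S op th dl} : Hyp S op th dl -> forall x, op x x = x.
Proof. intros [[_ [_ H]] _]; exact H. Qed.
Lemma Hyp_comm {S op th dl} : Hyp S op th dl -> forall x y, op x y = op y x.
Proof. intros [[_ [H _]] _]; exact H. Qed.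
Lemma Hyp_assoc {S op th dl} : Hyp S op th dl -> forall x y z, op x (op y z) = op (op x y) z.
Proof. intros [[H _] _]; exact H. Qed.

Lemma ni_elem {S op th dl} (H : Hyp S op th dl) x : HS (Msub (Mmul (th x) (th x)) (th x)) <= dl.
Proof. pose proof (Hyp_err H x x). rewrite (Hyp_idem H) in H0. exact H0. Qed.

Lemma trich {S op th dl} (H : Hyp S op th dl) x :
  Cnorm (tr (th x)) <= 0.4 \/ Cnorm (Csub (tr (th x)) (cr 1)) <= 0.4 \/ Cnorm (Csub (tr (th x)) (cr 2)) <= 0.4.
Proof.
  pose proof (Qlem _ _ (ni_elem H x) (Hyp_d0 H)). rewrite C2_cr in H0.
  pose proof (Hyp_d0 H). pose proof (Hyp_d1 H).
  set (t := tr (th x)) in *.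
  destruct (Rle_dec (Cnorm t) 0.4); auto. destruct (Rle_dec (Cnorm (Csub t (cr 1))) 0.4); auto.
  destruct (Rle_dec (Cnorm (Csub t (cr 2))) 0.4); auto. exfalso.
  rewrite C1_cr in H0.
  assert (0.16 <= Cnorm t * Cnorm (Csub t (cr 2))) by nra.
  assert (0.16 <= Cnorm (Csub t (cr 1)) * Cnorm (Csub t (cr 1))) by nra.
  unfold s2 in *. nra.
Qed.

Definition typ {S} (th : S -> M2) (x : S) : nat :=
  if Rle_dec (Cnorm (tr (th x))) 0.4 then 0%nat
  else if Rle_dec (Cnorm (Csub (tr (th x)) (cr 2))) 0.4 then 2%nat else 1%nat.

Lemma near0 (B : M2) (dl : R) : 0 <= dl -> dl < 0.03 ->
  HS (Msub (Mmul B B) B) <= dl -> Cnorm (tr B) <= 0.4 ->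
  HS B <= 1.12 * dl /\ Cnorm (tr B) <= 1.6 * dl.
Proof.
  intros H0 H1 HD Ht.
  assert (dl*dl <= 0.03*dl) by nra. assert (0 <= dl*dl) by nra.
  destruct (L0n B dl 0.4 0.29 (2*dl) (2.6*dl) HD Ht) as [_ Ht2]; try lra;
    try (unfold s2; lra).
  apply (L0n B dl (2.6*dl) 0.85); try lra; unfold s2; nra.
Qed.

Lemma ni_compl A : Msub (Mmul (Msub MI A) (Msub MI A)) (Msub MI A) = Msub (Mmul A A) A.
Proof. meq. Qed.
Lemma tr_compl A : tr (Msub MI A) = Copp (Csub (tr A) (cr 2)).
Proof. destruct A; unfold tr, Msub, Madd, Mopp, Mscale, MI, cr; rewrite ?Cm1; simpl. apply Ceq; simpl; ring. Qed.

Lemma near2 (A : M2) (dl : R) : 0 <= dl -> dl < 0.03 ->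
  HS (Msub (Mmul A A) A) <= dl -> Cnorm (Csub (tr A) (cr 2)) <= 0.4 ->
  HS (Msub MI A) <= 1.12 * dl /\ Cnorm (Csub (tr A) (cr 2)) <= 1.6 * dl.
Proof.
  intros H0 H1 HD Ht. rewrite <- ni_compl in HD.
  assert (Cnorm (tr (Msub MI A)) <= 0.4) by (rewrite tr_compl, Cnorm_opp; auto).
  destruct (near0 _ _ H0 H1 HD H) as [Ha Hb]. rewrite tr_compl, Cnorm_opp in Hb. auto.
Qed.

Lemma ref1_step (B : M2) (eta rho : R) :
  HS (Msub (Mmul B B) B) <= eta -> 0 <= eta -> Cnorm (Csub (tr B) (cr 1)) <= rho ->
  Cnorm (Csub (tr B) (cr 1)) * Cnorm (Csub (tr B) (cr 1)) * ((1 - rho*rho) - 2*s2*eta)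
   <= 2*eta*eta + s2*s2*eta*eta.
Proof.
  intros HD He Hr. pose proof (Qlem B eta HD He). rewrite C2_cr, C1_cr in H.
  set (t := tr B) in *.
  assert (1 - rho*rho <= Cnorm t * Cnorm (Csub t (cr 2))).
  { rewrite <- Cnorm_mul.
    replace (Cmul t (Csub t (cr 2))) with (Csub (Cmul (Csub t (cr 1)) (Csub t (cr 1))) C1)
      by (apply Ceq; unfold cr; simpl; ring).
    pose proof (Cnorm_triangle_sub C1 (Cmul (Csub t (cr 1)) (Csub t (cr 1)))).
    rewrite Cnorm_C1, Cnorm_mul in H0. rewrite (Cnorm_sub_sym _ C1).
    pose proof (Cnorm_nonneg (Csub t (cr 1))). nra. }
  pose proof (Cnorm_nonneg (Csub t (cr 1))).
  assert (0 <= Cnorm (Csub t (cr 1)) * Cnorm (Csub t (cr 1))) by nra.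
  nra.
Qed.

Lemma near1 (B : M2) (dl : R) : 0 <= dl -> dl < 0.03 ->
  HS (Msub (Mmul B B) B) <= dl -> Cnorm (Csub (tr B) (cr 1)) <= 0.4 ->
  Cnorm (Csub (tr B) (cr 1)) <= 2.1 * dl.
Proof.
  intros H0 H1 HD Ht.
  assert (dl*dl <= 0.03*dl) by nra. assert (0 <= dl*dl) by nra.
  pose proof (ref1_step B dl 0.4 HD H0 Ht).
  pose proof (Cnorm_nonneg (Csub (tr B) (cr 1))).
  set (u := Cnorm (Csub (tr B) (cr 1))) in *.
  assert (u <= 2.31*dl).
  { apply sq_le. lra. unfold s2 in *. nra. }
  pose proof (ref1_step B dl (2.31*dl) HD H0 H5). fold u in H6.
  apply sq_le. lra. unfold s2 in *. nra.
Qed.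

Definition kval (n : nat) : R := match n with 0%nat => 0 | 1%nat => 1 | _ => 2 end.

Lemma typ_cases {S} (th : S -> M2) x : typ th x = 0%nat \/ typ th x = 1%nat \/ typ th x = 2%nat.
Proof. unfold typ. destruct Rle_dec; auto. destruct Rle_dec; auto. Qed.

Lemma Cnorm_cr0 t : Cnorm (Csub t (cr 0)) = Cnorm t.
Proof. f_equal. apply Ceq; unfold cr; simpl; ring. Qed.

Lemma typ_spec {S op th dl} (H : Hyp S op th dl) x :
  Cnorm (Csub (tr (th x)) (cr (kval (typ th x)))) <= 2.1 * dl /\
  (typ th x = 0%nat -> HS (th x) <= 1.12 * dl) /\
  (typ th x = 2%nat -> HS (Msub MI (th x)) <= 1.12 * dl).
Proof.
  pose proof (Hyp_d0 H); pose proof (Hyp_d1 H); pose proof (ni_elem H x).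
  pose proof (trich H x).
  unfold typ. destruct Rle_dec as [h0|h0].
  - destruct (near0 _ _ H0 H1 H2 h0). simpl kval. rewrite Cnorm_cr0. repeat split; try lra; discriminate.
  - destruct Rle_dec as [h2|h2].
    + destruct (near2 _ _ H0 H1 H2 h2). simpl kval. repeat split; try lra; discriminate.
    + assert (Cnorm (Csub (tr (th x)) (cr 1)) <= 0.4) by (destruct H3 as [?|[?|?]]; lra).
      pose proof (near1 _ _ H0 H1 H2 H4). simpl kval. repeat split; try lra; discriminate.
Qed.

Lemma tr_sub A B : tr (Msub A B) = Csub (tr A) (tr B).
Proof. destruct A, B; unfold tr, Msub, Madd, Mopp, Mscale; rewrite Cm1; simpl; ring. Qed.
Lemma tr_add A B : tr (Madd A B) = Cadd (tr A) (tr B).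
Proof. destruct A, B; unfold tr, Madd; simpl; ring. Qed.

Lemma ni_diff_id Ax Az : Msub (Mmul (Msub Ax Az) (Msub Ax Az)) (Msub Ax Az) =
  Madd (Msub (Msub (Msub (Mmul Ax Ax) Ax) (Msub (Mmul Ax Az) Az)) (Msub (Mmul Az Ax) Az)) (Msub (Mmul Az Az) Az).
Proof. meq. Qed.

Lemma HS_add3 A B D E : HS (Madd (Msub (Msub A B) D) E) <= HS A + HS B + HS D + HS E.
Proof. eapply Rle_trans. apply HS_triangle. pose proof (HS_tri3 (Msub A B) D).
  pose proof (HS_tri3 A B). lra. Qed.

Lemma ni_diff {S op th dl} (H : Hyp S op th dl) x z : op x z = z ->
  HS (Msub (Mmul (Msub (th x) (th z)) (Msub (th x) (th z))) (Msub (th x) (th z))) <= 4 * dl.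
Proof.
  intro hz. rewrite ni_diff_id. eapply Rle_trans. apply HS_add3.
  pose proof (ni_elem H x); pose proof (ni_elem H z).
  pose proof (Hyp_err H x z). rewrite hz in H2.
  pose proof (Hyp_err H z x). rewrite (Hyp_comm H z x), hz in H3. lra.
Qed.

Lemma diff_tr {S op th dl} (H : Hyp S op th dl) x z :
  Cnorm (Csub (tr (Msub (th x) (th z))) (cr (kval (typ th x) - kval (typ th z)))) <= 4.2 * dl.
Proof.
  rewrite tr_sub.
  replace (Csub (Csub (tr (th x)) (tr (th z))) (cr (kval (typ th x) - kval (typ th z))))
   with (Csub (Csub (tr (th x)) (cr (kval (typ th x)))) (Csub (tr (th z)) (cr (kval (typ th z)))))
   by (apply Ceq; unfold cr; simpl; ring).
  destruct (typ_spec H x) as [h1 _]; destruct (typ_spec H z) as [h2 _].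
  unfold Csub at 1. eapply Rle_trans. apply Cnorm_triangle. rewrite Cnorm_opp. lra.
Qed.

Lemma negtrace (B : M2) (dl m : R) : 0 <= dl -> dl < 0.03 ->
  HS (Msub (Mmul B B) B) <= 4*dl -> Cnorm (Csub (tr B) (cr m)) <= 4.2*dl -> (m = -1 \/ m = -2) -> False.
Proof.
  intros h0 h1 HD Ht Hm.
  pose proof (Qlem B (4*dl) HD ltac:(lra)). rewrite C2_cr, C1_cr in H.
  set (t := tr B) in *.
  pose proof (cr_dist t 1 m). pose proof (cr_dist t 0 m). pose proof (cr_dist t 2 m).
  rewrite Cnorm_cr0 in H1.
  destruct Hm; subst m.
  - rewrite (Rabs_right (1 - -1)), (Rabs_right (0 - -1)), (Rabs_right (2 - -1)) in * by lra.
    assert (0.874 <= Cnorm t * 1) by lra.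
    assert (0.874 * 2.874 <= Cnorm t * Cnorm (Csub t (cr 2))).
    { apply Rmult_le_compat; lra. }
    assert (1.874 * 1.874 <= Cnorm (Csub t (cr 1)) * Cnorm (Csub t (cr 1))).
    { apply Rmult_le_compat; lra. }
    unfold s2 in *. nra.
  - rewrite (Rabs_right (1 - -2)), (Rabs_right (0 - -2)), (Rabs_right (2 - -2)) in * by lra.
    assert (1.874 * 3.874 <= Cnorm t * Cnorm (Csub t (cr 2))).
    { apply Rmult_le_compat; lra. }
    assert (2.874 * 2.874 <= Cnorm (Csub t (cr 1)) * Cnorm (Csub t (cr 1))).
    { apply Rmult_le_compat; lra. }
    unfold s2 in *. nra.
Qed.

Lemma mono {S op th dl} (H : Hyp S op th dl) x z : op x z = z -> (typ th z <= typ th x)%nat.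
Proof.
  intro hz. pose proof (ni_diff H x z hz). pose proof (diff_tr H x z).
  pose proof (Hyp_d0 H); pose proof (Hyp_d1 H).
  destruct (typ_cases th x) as [e1|[e1|e1]]; destruct (typ_cases th z) as [e2|[e2|e2]];
    rewrite ?e1, ?e2 in *; simpl kval in *; try lia; exfalso;
    eapply negtrace; eauto; lra.
Qed.

Lemma same_close {S op th dl} (H : Hyp S op th dl) x z : op x z = z -> typ th x = typ th z ->
  HS (Msub (th x) (th z)) <= 5.13 * dl.
Proof.
  intros hz he. pose proof (ni_diff H x z hz). pose proof (diff_tr H x z).
  pose proof (Hyp_d0 H); pose proof (Hyp_d1 H).
  rewrite he in H1. replace (kval (typ th z) - kval (typ th z)) with 0 in H1 by ring.
  rewrite Cnorm_cr0 in H1.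
  assert (dl*dl <= 0.03*dl) by nra. assert (0 <= dl*dl) by nra.
  apply (L0n _ (4*dl) (4.2*dl) 0.718 (5.13*dl) 1); try lra; unfold s2; nra.
Qed.

Lemma rank1_big {S op th dl} (H : Hyp S op th dl) x : typ th x = 1%nat -> 0.66 <= HS (th x).
Proof.
  intro e. destruct (typ_spec H x) as [h _]. rewrite e in h. simpl kval in h.
  pose proof (Hyp_d1 H).
  pose proof (cr_dist (tr (th x)) 0 1). rewrite Cnorm_cr0 in H1.
  rewrite Rabs_left in H1 by lra.
  pose proof (Cnorm_tr (th x)). unfold s2 in *. lra.
Qed.

Lemma relR_id Au Av Auv : Au =
  Msub (Madd (Msub (Mmul Au Av) Auv) Auv) (Madd (Mmul Au (Msub Av Au)) (Msub (Mmul Au Au) Au)).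
Proof. meq. Qed.

Lemma relR {S op th dl} (H : Hyp S op th dl) u v (kappa : R) :
  typ th u = 1%nat -> HS (Msub (th u) (th v)) <= kappa -> kappa <= 0.7 -> typ th (op u v) <> 0%nat.
Proof.
  intros eu hk hk1 e0.
  pose proof (rank1_big H u eu). destruct (typ_spec H (op u v)) as [_ [h0 _]].
  specialize (h0 e0). pose proof (Hyp_d1 H); pose proof (Hyp_d0 H).
  pose proof (Hyp_err H u v). pose proof (ni_elem H u).
  assert (HS (th u) <= dl + 1.12*dl + HS (th u) * kappa + dl).
  { rewrite (relR_id (th u) (th v) (th (op u v))) at 1.
    eapply Rle_trans. apply HS_tri3. eapply Rle_trans. apply Rplus_le_compat. apply HS_triangle. apply HS_triangle.
    pose proof (HS_mul (th u) (Msub (th v) (th u))). rewrite HS_sub_sym in H5.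
    pose proof (HS_nonneg (th u)). nra. }
  nra.
Qed.

Lemma t2_id Ax Ay Axy : Mmul (Msub Ay Axy) (Msub Ay Axy) =
  Madd (Mopp (Mmul (Madd (Msub Ay Axy) (Msub (Msub (Mmul Ay Ay) Ay) (Msub (Mmul Axy Ay) Axy))) (Msub Ax MI)))
       (Mmul (Msub Ay Axy) (Msub (Mmul Ay Ax) Axy)).
Proof. meq. Qed.

Lemma Cnorm_cr m : Cnorm (cr m) = Rabs m.
Proof. apply Cnorm_real. Qed.

Lemma typ2_mul {S op th dl} (H : Hyp S op th dl) x y : typ th x = 2%nat -> typ th (op x y) = typ th y.
Proof.
  intro ex. destruct (typ_spec H x) as [_ [_ hE]]. specialize (hE ex). rewrite HS_sub_sym in hE.
  pose proof (Hyp_d1 H); pose proof (Hyp_d0 H).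
  assert (hyz : op y (op x y) = op x y).
  { rewrite (Hyp_comm H x y), (Hyp_assoc H), (Hyp_idem H). reflexivity. }
  pose proof (ni_diff H y (op x y) hyz) as hB.
  set (B := Msub (th y) (th (op x y))) in *.
  pose proof (ni_elem H y) as hDy.
  pose proof (Hyp_err H (op x y) y) as hE1.
  rewrite (Hyp_comm H (op x y) y), hyz in hE1.
  pose proof (Hyp_err H y x) as hE2. rewrite (Hyp_comm H y x) in hE2.
  assert (HB2 : HS (Mmul B B) <= (HS B + dl + dl) * (1.12*dl) + HS B * dl).
  { unfold B. rewrite (t2_id (th x)). fold B.
    eapply Rle_trans. apply HS_triangle. unfold Mopp. rewrite HS_scale, Cnorm_m1, Rmult_1_l.
    apply Rplus_le_compat.
    - eapply Rle_trans. apply HS_mul. apply Rmult_le_compat; try apply HS_nonneg; auto.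
      eapply Rle_trans. apply HS_triangle. pose proof (HS_tri3 (Msub (Mmul (th y) (th y)) (th y)) (Msub (Mmul (th (op x y)) (th y)) (th (op x y)))). lra.
    - eapply Rle_trans. apply HS_mul. apply Rmult_le_compat_l; auto. apply HS_nonneg. }
  assert (HBs : HS B <= 0.131).
  { pose proof (HS_tri3 (Msub (Mmul B B) B) (Mmul B B)).
    replace (Msub (Msub (Mmul B B) B) (Mmul B B)) with (Mopp B) in H2 by meq.
    unfold Mopp in H2. rewrite HS_scale, Cnorm_m1, Rmult_1_l in H2.
    assert (HS B * (1 - 2.12*dl) <= 4*dl + 2.24*dl*dl) by nra.
    pose proof (HS_nonneg B).
    assert (HS B * 0.9364 <= HS B * (1 - 2.12*dl)) by (apply Rmult_le_compat_l; lra).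
    assert (dl * dl <= 0.03 * dl) by nra. lra. }
  pose proof (diff_tr H y (op x y)) as htr. fold B in htr.
  pose proof (Cnorm_tr B).
  pose proof (cr_dist (tr B) 0 (kval (typ th y) - kval (typ th (op x y)))).
  rewrite Cnorm_cr0 in H3.
  destruct (typ_cases th y) as [e1|[e1|e1]]; destruct (typ_cases th (op x y)) as [e2|[e2|e2]];
    rewrite ?e1, ?e2 in *; simpl kval in *; try reflexivity; exfalso;
    unfold s2 in *; unfold Rabs in H3; destruct Rcase_abs in H3; lra.
Qed.

Definition cls {S} (op : S -> S -> S) (th : S -> M2) (x0 x : S) : nat := typ th (op x x0).

Lemma sl_absorb {S op th dl} (H : Hyp S op th dl) x y : op x (op x y) = op x y.
Proof. rewrite (Hyp_assoc H), (Hyp_idem H). reflexivity. Qed.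
Lemma sl_absorb2 {S op th dl} (H : Hyp S op th dl) x y : op y (op x y) = op x y.
Proof. rewrite (Hyp_comm H x y). apply (sl_absorb H). Qed.
Lemma sl_mono {S op th dl} (H : Hyp S op th dl) y z w : op y z = z -> op (op y w) (op z w) = op z w.
Proof.
  intro hz. rewrite <- (Hyp_assoc H). rewrite (Hyp_comm H z w), (Hyp_assoc H w w z), (Hyp_idem H).
  rewrite (Hyp_comm H w z), (Hyp_assoc H), hz. reflexivity.
Qed.

Lemma cls_le1 {S op th dl} (H : Hyp S op th dl) x0 x : typ th x0 = 1%nat -> (cls op th x0 x <= 1)%nat.
Proof. intro e. unfold cls. rewrite <- e. apply (mono H). apply (sl_absorb2 H). Qed.

Lemma F4 {S op th dl} (H : Hyp S op th dl) x0 y z : typ th x0 = 1%nat ->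
  op y z = z -> typ th y = 1%nat -> typ th z = 1%nat -> cls op th x0 z = cls op th x0 y.
Proof.
  intros e0 hz ey ez.
  pose proof (mono H (op y x0) (op z x0) (sl_mono H y z x0 hz)).
  pose proof (cls_le1 H x0 y e0). pose proof (cls_le1 H x0 z e0). unfold cls in *.
  destruct (Nat.eq_dec (typ th (op z x0)) (typ th (op y x0))) as [|hne]; auto. exfalso.
  assert (ew : typ th (op y x0) = 1%nat) by lia. assert (ez0 : typ th (op z x0) = 0%nat) by lia.
  pose proof (Hyp_d1 H); pose proof (Hyp_d0 H).
  pose proof (same_close H y z hz ltac:(congruence)).
  pose proof (same_close H y (op y x0) (sl_absorb H y x0) ltac:(congruence)).
  assert (HS (Msub (th z) (th (op y x0))) <= 10.26 * dl).
  { eapply Rle_trans. apply (HS_sub_tri _ (th y)). rewrite HS_sub_sym. lra. }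
  apply (relR H z (op y x0) (10.26*dl) ez H7 ltac:(lra)).
  replace (op z (op y x0)) with (op z x0); auto.
  rewrite (Hyp_assoc H), (Hyp_comm H z y), hz. reflexivity.
Qed.

Lemma cls1_close {S op th dl} (H : Hyp S op th dl) x0 x : typ th x0 = 1%nat -> typ th x = 1%nat ->
  cls op th x0 x = 1%nat -> HS (Msub (th x) (th x0)) <= 10.26 * dl.
Proof.
  intros e0 ex ec. unfold cls in ec.
  pose proof (same_close H x (op x x0) (sl_absorb H x x0) ltac:(congruence)).
  pose proof (same_close H x0 (op x x0) (sl_absorb2 H x x0) ltac:(congruence)).
  eapply Rle_trans. apply (HS_sub_tri _ (th (op x x0))). rewrite (HS_sub_sym _ (th x0)). lra.
Qed.

Lemma cls0_id Ax A0 : Msub (Mmul (Madd Ax A0) (Madd Ax A0)) (Madd Ax A0) =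
  Madd (Madd (Msub (Mmul Ax Ax) Ax) (Msub (Mmul A0 A0) A0)) (Madd (Mmul Ax A0) (Mmul A0 Ax)).
Proof. meq. Qed.

Lemma tr_MI : tr MI = cr 2.
Proof. unfold tr, MI, cr, C1; apply Ceq; simpl; ring. Qed.

Lemma cls0_close {S op th dl} (H : Hyp S op th dl) x0 x : typ th x0 = 1%nat -> typ th x = 1%nat ->
  cls op th x0 x = 0%nat -> HS (Msub (Madd (th x) (th x0)) MI) <= 8.6 * dl.
Proof.
  intros e0 ex ec. unfold cls in ec.
  pose proof (Hyp_d1 H); pose proof (Hyp_d0 H).
  destruct (typ_spec H (op x x0)) as [_ [h0 _]]. specialize (h0 ec).
  set (Cm := Madd (th x) (th x0)).
  assert (HC : HS (Msub (Mmul Cm Cm) Cm) <= 6.24 * dl).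
  { unfold Cm. rewrite cls0_id. pose proof (ni_elem H x). pose proof (ni_elem H x0).
    pose proof (Hyp_err H x x0). pose proof (Hyp_err H x0 x). rewrite (Hyp_comm H x0 x) in H5.
    pose proof (HS_sub_tri (Mmul (th x) (th x0)) (th (op x x0)) M0).
    pose proof (HS_sub_tri (Mmul (th x0) (th x)) (th (op x x0)) M0).
    replace (Msub (Mmul (th x) (th x0)) M0) with (Mmul (th x) (th x0)) in H6 by meq.
    replace (Msub (Mmul (th x0) (th x)) M0) with (Mmul (th x0) (th x)) in H7 by meq.
    replace (Msub (th (op x x0)) M0) with (th (op x x0)) in H6, H7 by meq.
    eapply Rle_trans. apply HS_triangle. eapply Rle_trans. apply Rplus_le_compat; apply HS_triangle.
    lra. }
  rewrite <- ni_compl in HC.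
  assert (Ht : Cnorm (tr (Msub MI Cm)) <= 4.2 * dl).
  { destruct (typ_spec H x) as [h1 _]; destruct (typ_spec H x0) as [h2 _].
    rewrite ex in h1; rewrite e0 in h2. simpl kval in *.
    unfold Cm. rewrite tr_sub, tr_add, tr_MI.
    replace (Csub (cr 2) (Cadd (tr (th x)) (tr (th x0)))) with
      (Copp (Cadd (Csub (tr (th x)) (cr 1)) (Csub (tr (th x0)) (cr 1)))) by (apply Ceq; unfold cr; simpl; ring).
    rewrite Cnorm_opp. eapply Rle_trans. apply Cnorm_triangle. lra. }
  assert (dl*dl <= 0.03*dl) by nra. assert (0 <= dl*dl) by nra.
  rewrite HS_sub_sym.
  apply (L0n _ (6.24*dl) (4.2*dl) 0.67 (8.6*dl) 1); try lra; unfold s2; nra.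
Qed.

Lemma mul_same {S op th dl} (H : Hyp S op th dl) x0 x y : typ th x0 = 1%nat -> typ th x = 1%nat ->
  typ th y = 1%nat -> cls op th x0 x = cls op th x0 y -> typ th (op x y) = 1%nat.
Proof.
  intros e0 ex ey ec.
  pose proof (Hyp_d1 H); pose proof (Hyp_d0 H).
  assert (HS (Msub (th x) (th y)) <= 0.7).
  { pose proof (cls_le1 H x0 x e0).
    destruct (cls op th x0 x) as [|[|]] eqn:E; try lia.
    - pose proof (cls0_close H x0 x e0 ex E). pose proof (cls0_close H x0 y e0 ey ltac:(congruence)).
      replace (Msub (th x) (th y)) with (Msub (Msub (Madd (th x) (th x0)) MI) (Msub (Madd (th y) (th x0)) MI)) by meq.
      eapply Rle_trans. apply HS_tri3. lra.
    - pose proof (cls1_close H x0 x e0 ex E). pose proof (cls1_close H x0 y e0 ey ltac:(congruence)).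
      eapply Rle_trans. apply (HS_sub_tri _ (th x0)). rewrite (HS_sub_sym (th x0)). lra. }
  pose proof (relR H x y 0.7 ex H2 ltac:(lra)).
  pose proof (mono H x (op x y) (sl_absorb H x y)). lia.
Qed.

Lemma mul_cls {S op th dl} (H : Hyp S op th dl) x0 x y : typ th x0 = 1%nat -> typ th x = 1%nat ->
  typ th y = 1%nat -> typ th (op x y) = 1%nat -> cls op th x0 (op x y) = cls op th x0 x /\ cls op th x0 (op x y) = cls op th x0 y.
Proof.
  intros e0 ex ey exy. split.
  - apply (F4 H x0 x (op x y)); auto. apply (sl_absorb H).
  - apply (F4 H x0 y (op x y)); auto. apply (sl_absorb2 H).
Qed.

Lemma mul_diff {S op th dl} (H : Hyp S op th dl) x0 x y : typ th x0 = 1%nat -> typ th x = 1%nat ->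
  typ th y = 1%nat -> cls op th x0 x <> cls op th x0 y -> typ th (op x y) = 0%nat.
Proof.
  intros e0 ex ey ne.
  pose proof (mono H x (op x y) (sl_absorb H x y)).
  destruct (Nat.eq_dec (typ th (op x y)) 0%nat); auto.
  assert (typ th (op x y) = 1%nat) by lia.
  destruct (mul_cls H x0 x y e0 ex ey H1). congruence.
Qed.

Definition conj (z : C) : C := (fst z, - snd z).

Definition csqrt (z : C) : C :=
  let u := sqrt ((Cnorm z + fst z) / 2) in (u, snd z / (2 * u)).

Lemma Cnorm_ge_re z : Rabs (fst z) <= Cnorm z.
Proof. destruct z as [x y]. unfold Cnorm, Cnorm2; simpl.
  rewrite <- sqrt_Rsqr_abs. apply sqrt_le_1_alt. unfold Rsqr. pose proof (Rle_0_sqr y); unfold Rsqr in *; lra. Qed.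

Lemma csqrt_sq z : 0 < fst z -> Cmul (csqrt z) (csqrt z) = z /\ 0 <= fst (csqrt z).
Proof.
  intro h. destruct z as [x y]. simpl in h. unfold csqrt, Cmul; simpl.
  pose proof (Cnorm_ge_re (x,y)). simpl in H. rewrite Rabs_right in H by lra.
  set (n := Cnorm (x,y)) in *.
  assert (hn : n * n = x*x + y*y) by (unfold n; rewrite Cnorm_sq; reflexivity).
  assert (hp : 0 < (n + x)/2) by lra.
  pose proof (sqrt_lt_R0 _ hp). set (u := sqrt ((n+x)/2)) in *.
  assert (hu : u * u = (n+x)/2) by (unfold u; apply sqrt_sqrt; lra).
  split; [|lra]. apply Ceq; simpl.
  - field_simplify; [|lra]. 
    replace (u^4) with ((u*u)*(u*u)) by ring. rewrite hu.
    replace (u^2) with (u*u) by ring. rewrite hu. field_simplify; [|lra].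
    replace (n^2) with (n*n) by ring. rewrite hn. field. lra.
  - field. lra.
Qed.

Definition Qm (w1 w2 : C) : M2 :=
  let c := cr (/ (Cnorm2 w1 + Cnorm2 w2)) in
  mkM2 (Cmul c (Cmul w1 (conj w1))) (Cmul c (Cmul w1 (conj w2)))
       (Cmul c (Cmul w2 (conj w1))) (Cmul c (Cmul w2 (conj w2))).

Lemma Qm_idem w1 w2 : 0 < Cnorm2 w1 + Cnorm2 w2 -> Mmul (Qm w1 w2) (Qm w1 w2) = Qm w1 w2.
Proof.
  intro h. destruct w1 as [p1 p2], w2 as [p3 p4]. unfold Cnorm2 in h; simpl in h.
  apply M2eq; unfold Qm, Mmul, Cnorm2, cr, conj, Cmul, Cadd; simpl; apply Ceq; simpl; field; lra.
Qed.

Lemma Qm_kill w1 w2 M : 0 < Cnorm2 w1 + Cnorm2 w2 ->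
  Cadd (Cmul (m11 M) w1) (Cmul (m12 M) w2) = C0 -> Cadd (Cmul (m21 M) w1) (Cmul (m22 M) w2) = C0 ->
  Mmul M (Qm w1 w2) = M0.
Proof.
  intros h e1 e2. destruct M as [a b c d]; simpl in *.
  apply M2eq; unfold Qm, Mmul, M0; simpl.
  - replace (Cadd (Cmul a (Cmul (cr (/ (Cnorm2 w1 + Cnorm2 w2))) (Cmul w1 (conj w1))))
       (Cmul b (Cmul (cr (/ (Cnorm2 w1 + Cnorm2 w2))) (Cmul w2 (conj w1)))))
     with (Cmul (Cmul (cr (/ (Cnorm2 w1 + Cnorm2 w2))) (conj w1)) (Cadd (Cmul a w1) (Cmul b w2))) by ring.
    rewrite e1. ring.
  - replace (Cadd (Cmul a (Cmul (cr (/ (Cnorm2 w1 + Cnorm2 w2))) (Cmul w1 (conj w2))))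
       (Cmul b (Cmul (cr (/ (Cnorm2 w1 + Cnorm2 w2))) (Cmul w2 (conj w2)))))
     with (Cmul (Cmul (cr (/ (Cnorm2 w1 + Cnorm2 w2))) (conj w2)) (Cadd (Cmul a w1) (Cmul b w2))) by ring.
    rewrite e1. ring.
  - replace (Cadd (Cmul c (Cmul (cr (/ (Cnorm2 w1 + Cnorm2 w2))) (Cmul w1 (conj w1))))
       (Cmul d (Cmul (cr (/ (Cnorm2 w1 + Cnorm2 w2))) (Cmul w2 (conj w1)))))
     with (Cmul (Cmul (cr (/ (Cnorm2 w1 + Cnorm2 w2))) (conj w1)) (Cadd (Cmul c w1) (Cmul d w2))) by ring.
    rewrite e2. ring.
  - replace (Cadd (Cmul c (Cmul (cr (/ (Cnorm2 w1 + Cnorm2 w2))) (Cmul w1 (conj w2))))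
       (Cmul d (Cmul (cr (/ (Cnorm2 w1 + Cnorm2 w2))) (Cmul w2 (conj w2)))))
     with (Cmul (Cmul (cr (/ (Cnorm2 w1 + Cnorm2 w2))) (conj w2)) (Cadd (Cmul c w1) (Cmul d w2))) by ring.
    rewrite e2. ring.
Qed.

Lemma Qm_norm_id c w1 w2 m : c = cr (/ (Cnorm2 w1 + Cnorm2 w2)) -> 0 < Cnorm2 w1 + Cnorm2 w2 ->
  Cmul c (Cadd (Cmul (Cmul w1 (conj w1)) m) (Cmul (conj w2) (Cmul w2 m))) = m.
Proof. intros -> h. destruct w1 as [p1 p2], w2 as [p3 p4], m as [q1 q2]. unfold Cnorm2 in *; simpl in *.
  unfold cr, conj, Cmul, Cadd; simpl. apply Ceq; simpl; field; lra. Qed.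
Lemma Qm_norm_id2 c w1 w2 m : c = cr (/ (Cnorm2 w1 + Cnorm2 w2)) -> 0 < Cnorm2 w1 + Cnorm2 w2 ->
  Cmul c (Cadd (Cmul (conj w1) (Cmul w1 m)) (Cmul (Cmul w2 (conj w2)) m)) = m.
Proof. intros -> h. destruct w1 as [p1 p2], w2 as [p3 p4], m as [q1 q2]. unfold Cnorm2 in *; simpl in *.
  unfold cr, conj, Cmul, Cadd; simpl. apply Ceq; simpl; field; lra. Qed.

Lemma Qm_fix w1 w2 M : 0 < Cnorm2 w1 + Cnorm2 w2 ->
  Cmul w1 (m21 M) = Cmul w2 (m11 M) -> Cmul w1 (m22 M) = Cmul w2 (m12 M) ->
  Mmul (Qm w1 w2) M = M.
Proof.
  intros h e1 e2. destruct M as [a b c d]; simpl in *.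
  set (k := cr (/ (Cnorm2 w1 + Cnorm2 w2))).
  apply M2eq; unfold Qm, Mmul; simpl; fold k.
  - replace (Cadd (Cmul (Cmul k (Cmul w1 (conj w1))) a) (Cmul (Cmul k (Cmul w1 (conj w2))) c))
      with (Cmul k (Cadd (Cmul (Cmul w1 (conj w1)) a) (Cmul (conj w2) (Cmul w1 c)))) by ring.
    rewrite e1. apply Qm_norm_id; auto.
  - replace (Cadd (Cmul (Cmul k (Cmul w1 (conj w1))) b) (Cmul (Cmul k (Cmul w1 (conj w2))) d))
      with (Cmul k (Cadd (Cmul (Cmul w1 (conj w1)) b) (Cmul (conj w2) (Cmul w1 d)))) by ring.
    rewrite e2. apply Qm_norm_id; auto.
  - replace (Cadd (Cmul (Cmul k (Cmul w2 (conj w1))) a) (Cmul (Cmul k (Cmul w2 (conj w2))) c))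
      with (Cmul k (Cadd (Cmul (conj w1) (Cmul w2 a)) (Cmul (Cmul w2 (conj w2)) c))) by ring.
    rewrite <- e1. apply Qm_norm_id2; auto.
  - replace (Cadd (Cmul (Cmul k (Cmul w2 (conj w1))) b) (Cmul (Cmul k (Cmul w2 (conj w2))) d))
      with (Cmul k (Cadd (Cmul (conj w1) (Cmul w2 b)) (Cmul (Cmul w2 (conj w2)) d))) by ring.
    rewrite <- e2. apply Qm_norm_id2; auto.
Qed.

Lemma Qm_HS2 w1 w2 be ga : 0 < Cnorm2 w1 + Cnorm2 w2 ->
  HS2 (Madd (Mscale be MI) (Mscale ga (Qm w1 w2))) = Cnorm2 be + Cnorm2 (Cadd be ga).
Proof.
  intro h. destruct w1 as [p1 p2], w2 as [p3 p4], be as [b1 b2], ga as [g1 g2].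
  unfold Cnorm2 in *; simpl in *.
  unfold HS2, Madd, Mscale, MI, Qm, Cnorm2, cr, conj, Cmul, Cadd, C1, C0; simpl.
  field. lra.
Qed.

Record eigdata (A : M2) (l : C) := {
  ev1 : C; ev2 : C;
  ev_pos : 0 < Cnorm2 ev1 + Cnorm2 ev2;
  ev_r1 : Cadd (Cmul (m11 A) ev1) (Cmul (m12 A) ev2) = Cmul l ev1;
  ev_r2 : Cadd (Cmul (m21 A) ev1) (Cmul (m22 A) ev2) = Cmul l ev2;
  ev_c1 : Cmul ev1 (m21 A) = Cmul ev2 (Csub (m11 A) (Csub (tr A) l));
  ev_c2 : Cmul ev1 (Csub (m22 A) (Csub (tr A) l)) = Cmul ev2 (m12 A) }.

Lemma Cnorm2_zero z : Cnorm2 z <= 0 -> z = C0.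
Proof. intro h. destruct z as [x y]. unfold Cnorm2 in h; simpl in h.
  pose proof (Rle_0_sqr x); pose proof (Rle_0_sqr y); unfold Rsqr in *.
  assert (x*x = 0) by lra. assert (y*y = 0) by lra.
  apply Rmult_integral in H1; apply Rmult_integral in H2.
  apply Ceq; simpl; lra. Qed.

Lemma get_eig (A : M2) (l : C) : det A = Cmul l (Csub (tr A) l) -> Cadd l l <> tr A -> eigdata A l.
Proof.
  intros h hne. destruct A as [a b c d]. unfold det, tr in *; simpl in *.
  destruct (Rlt_dec 0 (Cnorm2 b + Cnorm2 (Csub l a))) as [hp|hp].
  - refine {| ev1 := b; ev2 := Csub l a |}; cbn [m11 m12 m21 m22]; unfold tr; cbn [m11 m12 m21 m22]; auto.
    + ring.
    + transitivity (Cadd (Cmul d l) (Copp (Csub (Cmul a d) (Cmul b c)))). ring. rewrite h. ring.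
    + transitivity (Csub (Cmul a d) (Csub (Cmul a d) (Cmul b c))). ring. rewrite h. ring.
    + ring.
  - destruct (Rlt_dec 0 (Cnorm2 (Csub l d) + Cnorm2 c)) as [hq|hq].
    + refine {| ev1 := Csub l d; ev2 := c |}; cbn [m11 m12 m21 m22]; unfold tr; cbn [m11 m12 m21 m22]; auto.
      * transitivity (Cadd (Cmul a l) (Copp (Csub (Cmul a d) (Cmul b c)))). ring. rewrite h. ring.
      * ring.
      * ring.
      * transitivity (Csub (Cmul a d) (Cmul l (Csub (Cadd a d) l))). ring. rewrite <- h. ring.
    + exfalso. apply hne.
      pose proof (Cnorm2_nonneg b); pose proof (Cnorm2_nonneg (Csub l a));
      pose proof (Cnorm2_nonneg (Csub l d)); pose proof (Cnorm2_nonneg c).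
      assert (e1 : Csub l a = C0) by (apply Cnorm2_zero; lra).
      assert (e2 : Csub l d = C0) by (apply Cnorm2_zero; lra).
      transitivity (Csub (Cadd l l) (Cadd (Csub l a) (Csub l d))). rewrite e1, e2. ring. ring.
Qed.

Lemma ev_bound (A : M2) (l : C) (E : eigdata A l) :
  Cnorm (Csub (Cmul l l) l) <= HS (Msub (Mmul A A) A).
Proof.
  destruct E as [w1 w2 hp r1 r2 _ _].
  set (W := mkM2 w1 C0 w2 C0).
  assert (hAW : Mmul A W = Mscale l W).
  { destruct A; simpl in *. apply M2eq; unfold W, Mmul, Mscale; simpl; try rewrite <- r1; try rewrite <- r2; ring. }
  assert (hDW : Mmul (Msub (Mmul A A) A) W = Mscale (Csub (Cmul l l) l) W).
  { replace (Mmul (Msub (Mmul A A) A) W) with (Msub (Mmul A (Mmul A W)) (Mmul A W)) by meq.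
    rewrite hAW. replace (Mmul A (Mscale l W)) with (Mscale l (Mmul A W)) by meq. rewrite hAW. meq. }
  assert (hW : 0 < HS W).
  { unfold HS, HS2, W; simpl. apply sqrt_lt_R0. unfold C0, Cnorm2 at 2 4; simpl. lra. }
  pose proof (HS_mul (Msub (Mmul A A) A) W). rewrite hDW, HS_scale in H.
  apply Rmult_le_reg_r with (HS W); auto.
Qed.

Lemma P_idem_id (Q N : M2) : Mmul (Madd (Msub MI Q) (Mmul Q N)) (Madd (Msub MI Q) (Mmul Q N)) =
  Madd (Madd (Msub MI Q) (Mmul Q N))
    (Madd (Mmul (Msub (Mmul Q Q) Q) (Msub MI N)) (Msub (Mmul Q (Mmul (Mmul N Q) N)) (Mmul Q (Mmul N Q)))).
Proof. meq. Qed.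

Lemma P_diff_id (A Q : M2) (a b : C) :
  Msub A (Madd (Msub MI Q) (Mmul Q (Msub A (Mscale a MI)))) =
  Madd (Msub (Madd (Mscale (Csub b C1) MI) (Mscale (Csub a (Csub b C1)) Q)) (Mmul Q (Msub A (Mscale b MI))))
       (Msub A (Mscale b MI)).
Proof. meq. Qed.

Lemma Csub_norm_le z w : Cnorm (Csub z w) <= Cnorm z + Cnorm w.
Proof. unfold Csub. eapply Rle_trans. apply Cnorm_triangle. rewrite Cnorm_opp. lra. Qed.

Lemma Cnorm_cr_ m : Cnorm (cr m) = Rabs m.
Proof. apply Cnorm_real. Qed.

Lemma Cnorm_cr0_ t : Cnorm (Csub t (cr 0)) = Cnorm t.
Proof. f_equal. apply Ceq; unfold cr; simpl; ring. Qed.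

Definition hC : C := cr (1/2).
Lemma hh : Cadd hC hC = C1. Proof. unfold hC, cr, C1; apply Ceq; simpl; field. Qed.
Lemma hh4 : Cmul (Cmul hC hC) (cr 4) = C1. Proof. unfold hC, cr, C1; apply Ceq; simpl; field. Qed.
Lemma Cnorm_hC z : Cnorm (Cmul hC z) = Cnorm z / 2.
Proof. rewrite Cnorm_mul. unfold hC. rewrite Cnorm_cr_, Rabs_right by lra. field. Qed.
Lemma Cnorm_cr4 z : Cnorm (Cmul (cr 4) z) = 4 * Cnorm z.
Proof. rewrite Cnorm_mul, Cnorm_cr_, Rabs_right by lra. reflexivity. Qed.

Lemma idem_near (A : M2) (dl : R) : 0 <= dl -> dl < 0.03 ->
  HS (Msub (Mmul A A) A) <= dl -> Cnorm (Csub (tr A) (cr 1)) <= 2.1 * dl ->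
  exists P, Mmul P P = P /\ HS (Msub A P) <= 1.59 * dl.
Proof.
  intros H0 H1 HD Ht.
  pose proof (ni_t A) as E4. pose proof (ni_det A) as E2.
  set (D := Msub (Mmul A A) A) in *. set (t := tr A) in *. set (d := det A) in *.
  assert (Htau : Cnorm (tr D) <= s2 * dl).
  { eapply Rle_trans. apply Cnorm_tr. unfold s2 in *; nra. }
  assert (HdD : Cnorm (det D) <= dl*dl/2).
  { eapply Rle_trans. apply Cnorm_det. pose proof (HS_nonneg D). nra. }
  pose proof (cr_dist t 0 1). rewrite Cnorm_cr0_ in H.
  assert (Htt : Cnorm t <= 1.063).
  { pose proof (Csub_norm_le (Csub t (cr 1)) (Copp (cr 1))).
    replace (Csub (Csub t (cr 1)) (Copp (cr 1))) with t in H2 by (apply Ceq; unfold cr; simpl; ring).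
    rewrite Cnorm_opp, Cnorm_cr_, Rabs_right in H2 by lra. lra. }
  rewrite Rabs_left in H by lra.
  assert (Hd1 : 2 * Cnorm d <= 0.11).
  { rewrite <- Cnorm_double.
    replace (Cadd d d) with (Csub (Cmul t (Csub t C1)) (tr D)) by (rewrite E4; ring).
    eapply Rle_trans. apply Csub_norm_le. rewrite Cnorm_mul.
    pose proof (Cnorm_nonneg t). pose proof (Cnorm_nonneg (Csub t C1)). rewrite C1_cr in *.
    assert (Cnorm t * Cnorm (Csub t (cr 1)) <= 1.063 * 0.063) by (apply Rmult_le_compat; lra).
    unfold s2 in *; lra. }
  assert (Hd : Cnorm d <= 0.055) by lra.
  set (Dl := Csub (Cmul t t) (Cmul (cr 4) d)).
  assert (HDl : Cnorm (Csub Dl C1) <= 0.35).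
  { replace (Csub Dl C1) with (Csub (Cmul (Csub t (cr 1)) (Cadd (Csub t (cr 1)) (cr 2))) (Cmul (cr 4) d))
      by (unfold Dl, cr, C1; apply Ceq; simpl; ring).
    eapply Rle_trans. apply Csub_norm_le. rewrite Cnorm_mul, Cnorm_cr4.
    pose proof (Cnorm_triangle (Csub t (cr 1)) (cr 2)). rewrite Cnorm_cr_, Rabs_right in H2 by lra.
    pose proof (Cnorm_nonneg (Csub t (cr 1))).
    assert (Cnorm (Csub t (cr 1)) * Cnorm (Cadd (Csub t (cr 1)) (cr 2)) <= 0.063 * 2.063).
    { apply Rmult_le_compat; try lra. apply Cnorm_nonneg. }
    lra. }
  assert (HDr : 0 < fst Dl).
  { pose proof (Cnorm_ge_re (Csub Dl C1)).
    assert (fst (Csub Dl C1) = fst Dl - 1) by (unfold Csub, Cadd, Copp, C1; simpl; ring).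
    rewrite H3 in H2. unfold Rabs in H2. destruct Rcase_abs in H2; lra. }
  destruct (csqrt_sq Dl HDr) as [hs hs0]. set (s := csqrt Dl) in *.
  assert (Hs1 : Cnorm (Csub s C1) <= 0.212).
  { assert (1 <= Cnorm (Cadd s C1)).
    { pose proof (Cnorm_ge_re (Cadd s C1)).
      assert (fst (Cadd s C1) = fst s + 1) by (unfold Cadd, C1; simpl; ring).
      rewrite H3 in H2. rewrite Rabs_right in H2 by lra. lra. }
    assert (Cnorm (Csub s C1) * Cnorm (Cadd s C1) <= 0.35).
    { rewrite <- Cnorm_mul. replace (Cmul (Csub s C1) (Cadd s C1)) with (Csub (Cmul s s) C1) by ring.
      rewrite hs. auto. }
    pose proof (Cnorm_nonneg (Csub s C1)).
    assert (Cnorm (Csub s C1) <= 0.35) by nra.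
    assert (2 - Cnorm (Csub s C1) <= Cnorm (Cadd s C1)).
    { pose proof (Cnorm_triangle_sub (cr 2) (Copp (Csub s C1))). rewrite Cnorm_opp, Cnorm_cr_ in H6.
      rewrite Rabs_right in H6 by lra. replace (Csub (cr 2) (Copp (Csub s C1))) with (Cadd s C1) in H6
        by (apply Ceq; unfold cr, C1; simpl; ring). lra. }
    nra. }
  set (a := Cmul hC (Csub t s)). set (b := Csub t a).
  assert (Ha : Cnorm a <= 0.138).
  { unfold a. rewrite Cnorm_hC.
    replace (Csub t s) with (Csub (Csub t (cr 1)) (Csub s C1)) by (apply Ceq; unfold cr, C1; simpl; ring).
    pose proof (Csub_norm_le (Csub t (cr 1)) (Csub s C1)). lra. }
  assert (Hb : Cnorm (Csub b C1) <= 0.138).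
  { replace (Csub b C1) with (Cmul hC (Cadd (Csub t (cr 1)) (Csub s C1))).
    rewrite Cnorm_hC. pose proof (Cnorm_triangle (Csub t (cr 1)) (Csub s C1)). lra.
    unfold b, a. rewrite <- C1_cr.
    transitivity (Csub (Csub (Cmul (Cadd hC hC) t) (Cmul hC (Csub t s))) (Cmul (Cadd hC hC) C1)).
    ring. rewrite hh. ring. }
  assert (Hdet : d = Cmul a (Csub t a)).
  { transitivity (Cmul (Cmul (Cmul hC hC) (cr 4)) d). rewrite hh4; ring.
    transitivity (Cmul (Cmul hC hC) (Csub (Cmul t t) (Cmul s s))).
    rewrite hs. unfold Dl. ring.
    unfold a. transitivity (Cmul (Cmul hC (Csub t s)) (Csub (Cmul (Cadd hC hC) t) (Cmul hC (Csub t s)))).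
    ring. rewrite hh. ring. }
  assert (Ea : eigdata A a).
  { apply get_eig. exact Hdet. intro e. fold t in e.
    assert (Cnorm t <= 0.28) by (rewrite <- e, Cnorm_double; lra). lra. }
  assert (Eb : eigdata A b).
  { apply get_eig. fold t d. rewrite Hdet. unfold b. ring. intro e. fold t in e.
    assert (Csub t (cr 1) = Cadd (Cadd (Csub b C1) (Csub b C1)) C1) by (rewrite <- e; apply Ceq; unfold cr, C1; simpl; ring).
    pose proof (Cnorm_triangle_sub C1 (Copp (Cadd (Csub b C1) (Csub b C1)))).
    rewrite Cnorm_C1, Cnorm_opp, Cnorm_double in H3.
    replace (Csub C1 (Copp (Cadd (Csub b C1) (Csub b C1)))) with (Cadd (Cadd (Csub b C1) (Csub b C1)) C1) in H3 by ring.
    rewrite <- H2 in H3. lra. }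
  pose proof (ev_bound A a Ea) as hea. pose proof (ev_bound A b Eb) as heb. fold D in hea, heb.
  assert (Ha2 : Cnorm a <= 1.12 * dl).
  { replace (Csub (Cmul a a) a) with (Cmul a (Csub a C1)) in hea by ring.
    rewrite Cnorm_mul in hea. pose proof (Cnorm_sub_C1_ge a). pose proof (Cnorm_nonneg a).
    assert (Cnorm a * 0.862 <= Cnorm a * Cnorm (Csub a C1)) by (apply Rmult_le_compat_l; lra).
    assert (Cnorm a * 0.965 <= Cnorm a * Cnorm (Csub a C1)) by (apply Rmult_le_compat_l; lra). lra. }
  assert (Hb2 : Cnorm (Csub b C1) <= 1.12 * dl).
  { replace (Csub (Cmul b b) b) with (Cmul (Csub b C1) b) in heb by ring.
    rewrite Cnorm_mul in heb.
    pose proof (Cnorm_triangle_sub C1 (Copp (Csub b C1))). rewrite Cnorm_C1, Cnorm_opp in H2.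
    replace (Csub C1 (Copp (Csub b C1))) with b in H2 by ring.
    pose proof (Cnorm_nonneg (Csub b C1)).
    assert (Cnorm (Csub b C1) * 0.862 <= Cnorm (Csub b C1) * Cnorm b) by (apply Rmult_le_compat_l; lra).
    assert (Cnorm (Csub b C1) * 0.965 <= Cnorm (Csub b C1) * Cnorm b) by (apply Rmult_le_compat_l; lra). lra. }
  destruct Ea as [w1 w2 hp r1 r2 c1 c2].
  set (Q := Qm w1 w2).
  set (Nm := Msub A (Mscale a MI)).
  assert (hNQ : Mmul Nm Q = M0).
  { apply Qm_kill; auto.
    - transitivity (Csub (Cadd (Cmul (m11 A) w1) (Cmul (m12 A) w2)) (Cmul a w1)).
      unfold Nm, Msub, Madd, Mopp, Mscale, MI; rewrite Cm1; cbn [m11 m12 m21 m22]; ring.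
      rewrite r1; ring.
    - transitivity (Csub (Cadd (Cmul (m21 A) w1) (Cmul (m22 A) w2)) (Cmul a w2)).
      unfold Nm, Msub, Madd, Mopp, Mscale, MI; rewrite Cm1; cbn [m11 m12 m21 m22]; ring.
      rewrite r2; ring. }
  assert (hQQ : Mmul Q Q = Q) by (apply Qm_idem; auto).
  set (Mb := Msub A (Mscale b MI)).
  assert (hfix : Mmul Q Mb = Mb).
  { apply Qm_fix; auto.
    - transitivity (Cmul w1 (m21 A)).
      unfold Mb, Msub, Madd, Mopp, Mscale, MI; rewrite Cm1; cbn [m11 m12 m21 m22]; ring.
      rewrite c1. fold t b.
      unfold Mb, Msub, Madd, Mopp, Mscale, MI; rewrite Cm1; cbn [m11 m12 m21 m22]; ring.
    - transitivity (Cmul w1 (Csub (m22 A) (Csub (tr A) a))).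
      unfold Mb, Msub, Madd, Mopp, Mscale, MI; rewrite Cm1; cbn [m11 m12 m21 m22]; fold t b; ring.
      rewrite c2.
      unfold Mb, Msub, Madd, Mopp, Mscale, MI; rewrite Cm1; cbn [m11 m12 m21 m22]; ring. }
  exists (Madd (Msub MI Q) (Mmul Q Nm)). split.
  - rewrite P_idem_id. rewrite hNQ, hQQ. meq.
  - unfold Nm. rewrite (P_diff_id A Q a b). fold Nm Mb. rewrite hfix.
    replace (Madd (Msub (Madd (Mscale (Csub b C1) MI) (Mscale (Csub a (Csub b C1)) Q)) Mb) Mb)
      with (Madd (Mscale (Csub b C1) MI) (Mscale (Csub a (Csub b C1)) Q)) by meq.
    match goal with |- HS ?X <= _ => change (HS X) with (sqrt (HS2 X)) end.
    unfold Q. rewrite Qm_HS2 by auto.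
    replace (Cadd (Csub b C1) (Csub a (Csub b C1))) with a by ring.
    rewrite <- !Cnorm_sq. apply sqrt_le_sq. lra.
    pose proof (Cnorm_nonneg a). pose proof (Cnorm_nonneg (Csub b C1)).
    assert (Cnorm (Csub b C1) * Cnorm (Csub b C1) <= (1.12*dl)*(1.12*dl)) by (apply Rmult_le_compat; lra).
    assert (Cnorm a * Cnorm a <= (1.12*dl)*(1.12*dl)) by (apply Rmult_le_compat; lra).
    nra.
Qed.

Definition phig {S} (th : S -> M2) (P : M2) (c : S -> nat) (x : S) : M2 :=
  match typ th x with 0%nat => M0 | 1%nat => if Nat.eqb (c x) 1 then P else Msub MI P | _ => MI end.

Lemma phig_mul {S op th dl} (H : Hyp S op th dl) P c :
  Mmul P P = P ->
  (forall x, typ th x = 1%nat -> (c x <= 1)%nat) ->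
  (forall x y, typ th x = 1%nat -> typ th y = 1%nat -> c x = c y -> typ th (op x y) = 1%nat /\ c (op x y) = c x) ->
  (forall x y, typ th x = 1%nat -> typ th y = 1%nat -> c x <> c y -> typ th (op x y) = 0%nat) ->
  (forall x y, typ th x = 2%nat -> typ th y = 1%nat -> c (op x y) = c y) ->
  forall x y, phig th P c (op x y) = Mmul (phig th P c x) (phig th P c y).
Proof.
  intros hP hc h11 hdiff h2 x y. unfold phig.
  assert (Hxy : (typ th (op x y) <= typ th x)%nat) by (apply (mono H); apply (sl_absorb H)).
  assert (Hyx : (typ th (op x y) <= typ th y)%nat) by (apply (mono H); apply (sl_absorb2 H)).
  destruct (typ_cases th x) as [ex|[ex|ex]].
  - assert (typ th (op x y) = 0%nat) by lia. rewrite ex, H0. meq.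
  - destruct (typ_cases th y) as [ey|[ey|ey]].
    + assert (typ th (op x y) = 0%nat) by lia. rewrite ey, H0. destruct (Nat.eqb (c x) 1); meq.
    + pose proof (hc x ex); pose proof (hc y ey). rewrite ex, ey.
      destruct (Nat.eq_dec (c x) (c y)) as [e|ne].
      * destruct (h11 x y ex ey e) as [e1 e2]. rewrite e1, e2, e.
        destruct (Nat.eqb (c y) 1); [rewrite hP; auto | ].
        -- replace (Mmul (Msub MI P) (Msub MI P)) with (Msub (Madd MI (Mmul P P)) (Madd P P)) by meq.
           rewrite hP. meq.
      * rewrite (hdiff x y ex ey ne).
        destruct (c x) as [|[|]] eqn:E1; destruct (c y) as [|[|]] eqn:E2; try lia; simpl.
        -- replace (Mmul (Msub MI P) P) with (Msub P (Mmul P P)) by meq. rewrite hP. meq.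
        -- replace (Mmul P (Msub MI P)) with (Msub P (Mmul P P)) by meq. rewrite hP. meq.
    + rewrite (Hyp_comm H x y). rewrite (typ2_mul H y x ey), ex, ey.
      rewrite (h2 y x ey ex). destruct (Nat.eqb (c x) 1); meq.
  - rewrite (typ2_mul H x y ex), ex.
    destruct (typ_cases th y) as [ey|[ey|ey]]; rewrite ey; try meq.
    rewrite (h2 x y ex ey). destruct (Nat.eqb (c y) 1); meq.
Qed.

Definition inset (P X : M2) : Prop := X = M0 \/ X = MI \/ X = P \/ X = Msub MI P.

Lemma phig_inset {S} (th : S -> M2) P c x : inset P (phig th P c x).
Proof. unfold phig, inset. destruct (typ th x) as [|[|]]; auto. destruct Nat.eqb; auto. Qed.

Lemma inset_idem P X : Mmul P P = P -> inset P X -> Mmul X X = X.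
Proof. intros hP hX. destruct hX as [e|[e|[e|e]]]; subst X; auto; try meq.
  replace (Mmul (Msub MI P) (Msub MI P)) with (Msub (Madd MI (Mmul P P)) (Madd P P)) by meq.
  rewrite hP. meq. Qed.

Lemma inset_comm P X Y : inset P X -> inset P Y -> Mmul X Y = Mmul Y X.
Proof. intros hX hY. destruct hX as [e1|[e1|[e1|e1]]]; destruct hY as [e2|[e2|[e2|e2]]]; subst X Y; meq. Qed.

Lemma phig_bound {S op th dl} (H : Hyp S op th dl) x0 P : typ th x0 = 1%nat ->
  HS (Msub (th x0) P) <= 1.59 * dl ->
  forall x, HS (Msub (th x) (phig th P (cls op th x0) x)) <= 12 * dl.
Proof.
  intros e0 hP x. pose proof (Hyp_d0 H). unfold phig.
  destruct (typ_spec H x) as [_ [h0 h2]].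
  destruct (typ_cases th x) as [e|[e|e]]; rewrite e.
  - replace (Msub (th x) M0) with (th x) by meq. specialize (h0 e). lra.
  - pose proof (cls_le1 H x0 x e0).
    destruct (cls op th x0 x) as [|[|]] eqn:E; try lia; simpl.
    + pose proof (cls0_close H x0 x e0 e E).
      replace (Msub (th x) (Msub MI P)) with (Msub (Msub (Madd (th x) (th x0)) MI) (Msub (th x0) P)) by meq.
      eapply Rle_trans. apply HS_tri3. lra.
    + pose proof (cls1_close H x0 x e0 e E).
      eapply Rle_trans. apply (HS_sub_tri _ (th x0)). lra.
  - specialize (h2 e). rewrite HS_sub_sym. lra.
Qed.

Lemma part1 (S : Type) (op : S -> S -> S) (HSL : is_semilattice S op) (delta : R) (theta : S -> M2) :
  0 <= delta -> delta < 0.03 ->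
  (forall e f, HS (Msub (Mmul (theta e) (theta f)) (theta (op e f))) <= delta) ->
  exists phi : S -> M2,
    (forall e f, phi (op e f) = Mmul (phi e) (phi f)) /\
    (forall x, Mmul (phi x) (phi x) = phi x) /\
    (forall x y, Mmul (phi x) (phi y) = Mmul (phi y) (phi x)) /\
    (forall x, HS (Msub (theta x) (phi x)) <= 12 * delta).
Proof.
  intros h0 h1 herr.
  assert (H : Hyp S op theta delta) by (repeat split; auto; apply HSL).
  destruct (classic (exists x0, typ theta x0 = 1%nat)) as [[x0 e0]|hno].
  - destruct (idem_near (theta x0) delta h0 h1 (ni_elem H x0)) as [P [hP hPd]].
    { destruct (typ_spec H x0) as [h _]. rewrite e0 in h. exact h. }
    exists (phig theta P (cls op theta x0)). split; [|split; [|split]].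
    + apply (phig_mul H); auto.
      * intros; apply (cls_le1 H); auto.
      * intros x y ex ey ec. pose proof (mul_same H x0 x y e0 ex ey ec). split; auto.
        apply (mul_cls H x0 x y e0 ex ey H0).
      * intros x y ex ey ne. apply (mul_diff H x0 x y e0 ex ey ne).
      * intros x y ex ey. pose proof (typ2_mul H x y ex). rewrite ey in H0.
        apply (F4 H x0 y (op x y) e0); auto. apply (sl_absorb2 H).
    + intro x. apply (inset_idem P); auto. apply phig_inset.
    + intros x y. apply (inset_comm P); apply phig_inset.
    + apply (phig_bound H x0 P e0 hPd).
  - assert (hno' : forall x, typ theta x <> 1%nat) by (intros x e; apply hno; eauto).
    exists (phig theta M0 (fun _ => 0%nat)). split; [|split; [|split]].
    + apply (phig_mul H); [meq| ..]; intros; exfalso; eapply hno'; eauto.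
    + intro x. apply (inset_idem M0); [meq | apply phig_inset].
    + intros x y. apply (inset_comm M0); apply phig_inset.
    + intro x. unfold phig. destruct (typ_spec H x) as [_ [h0' h2]].
      destruct (typ_cases theta x) as [e|[e|e]].
      * rewrite e. replace (Msub (theta x) M0) with (theta x) by meq. specialize (h0' e). lra.
      * exfalso; eapply hno'; eauto.
      * rewrite e. specialize (h2 e). rewrite HS_sub_sym. lra.
Qed.

Definition chi1 {S} (th : S -> M2) (c : S -> nat) (x : S) : R :=
  match typ th x with 0%nat => 0 | 1%nat => if Nat.eqb (c x) 1 then 1 else 0 | _ => 1 end.
Definition chi2 {S} (th : S -> M2) (c : S -> nat) (x : S) : R :=
  match typ th x with 0%nat => 0 | 1%nat => if Nat.eqb (c x) 1 then 0 else 1 | _ => 1 end.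

Lemma chi_mul {S op th dl} (H : Hyp S op th dl) c :
  (forall x, typ th x = 1%nat -> (c x <= 1)%nat) ->
  (forall x y, typ th x = 1%nat -> typ th y = 1%nat -> c x = c y -> typ th (op x y) = 1%nat /\ c (op x y) = c x) ->
  (forall x y, typ th x = 1%nat -> typ th y = 1%nat -> c x <> c y -> typ th (op x y) = 0%nat) ->
  (forall x y, typ th x = 2%nat -> typ th y = 1%nat -> c (op x y) = c y) ->
  forall x y, chi1 th c (op x y) = chi1 th c x * chi1 th c y /\ chi2 th c (op x y) = chi2 th c x * chi2 th c y.
Proof.
  intros hc h11 hdiff h2 x y. unfold chi1, chi2.
  assert (Hxy : (typ th (op x y) <= typ th x)%nat) by (apply (mono H); apply (sl_absorb H)).
  assert (Hyx : (typ th (op x y) <= typ th y)%nat) by (apply (mono H); apply (sl_absorb2 H)).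
  destruct (typ_cases th x) as [ex|[ex|ex]].
  - assert (typ th (op x y) = 0%nat) by lia. rewrite ex, H0. split; ring.
  - destruct (typ_cases th y) as [ey|[ey|ey]].
    + assert (typ th (op x y) = 0%nat) by lia. rewrite ey, H0. destruct (Nat.eqb (c x) 1); split; ring.
    + pose proof (hc x ex); pose proof (hc y ey). rewrite ex, ey.
      destruct (Nat.eq_dec (c x) (c y)) as [e|ne].
      * destruct (h11 x y ex ey e) as [e1 e2]. rewrite e1, e2, e.
        destruct (Nat.eqb (c y) 1); split; ring.
      * rewrite (hdiff x y ex ey ne).
        destruct (c x) as [|[|]] eqn:E1; destruct (c y) as [|[|]] eqn:E2; try lia; simpl; split; ring.
    + rewrite (Hyp_comm H x y). rewrite (typ2_mul H y x ey), ex, ey.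
      rewrite (h2 y x ey ex). destruct (Nat.eqb (c x) 1); split; ring.
  - rewrite (typ2_mul H x y ex), ex.
    destruct (typ_cases th y) as [ey|[ey|ey]]; rewrite ey; try (split; ring).
    rewrite (h2 x y ex ey). destruct (Nat.eqb (c y) 1); split; ring.
Qed.

Lemma phig_chi {S} (th : S -> M2) P c x :
  phig th P c x = Madd (Mscale (cr (chi1 th c x)) P) (Mscale (cr (chi2 th c x)) (Msub MI P)).
Proof.
  unfold phig, chi1, chi2, cr. destruct (typ th x) as [|[|]]; try destruct (Nat.eqb (c x) 1);
  destruct P; apply M2eq; unfold Madd, Msub, Mopp, Mscale, MI, M0, C1, C0; simpl; apply Ceq; simpl; ring.
Qed.

Lemma chi_01 {S} (th : S -> M2) c x : (chi1 th c x = 0 \/ chi1 th c x = 1) /\ (chi2 th c x = 0 \/ chi2 th c x = 1).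
Proof. unfold chi1, chi2. destruct (typ th x) as [|[|]]; try destruct (Nat.eqb (c x) 1); auto. Qed.

Lemma part1_chi (S : Type) (op : S -> S -> S) (HSL : is_semilattice S op) (delta : R) (theta : S -> M2) :
  0 <= delta -> delta < 0.03 ->
  (forall e f, HS (Msub (Mmul (theta e) (theta f)) (theta (op e f))) <= delta) ->
  exists P (x1 x2 : S -> R), Mmul P P = P /\
    (forall x, (x1 x = 0 \/ x1 x = 1) /\ (x2 x = 0 \/ x2 x = 1)) /\
    (forall x y, x1 (op x y) = x1 x * x1 y /\ x2 (op x y) = x2 x * x2 y) /\
    (forall x, HS (Msub (theta x) (Madd (Mscale (cr (x1 x)) P) (Mscale (cr (x2 x)) (Msub MI P)))) <= 12 * delta).
Proof.
  intros h0 h1 herr.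
  assert (H : Hyp S op theta delta) by (repeat split; auto; apply HSL).
  destruct (classic (exists x0, typ theta x0 = 1%nat)) as [[x0 e0]|hno].
  - destruct (idem_near (theta x0) delta h0 h1 (ni_elem H x0)) as [P [hP hPd]].
    { destruct (typ_spec H x0) as [h _]. rewrite e0 in h. exact h. }
    exists P, (chi1 theta (cls op theta x0)), (chi2 theta (cls op theta x0)). split; [auto|split; [|split]].
    + intro x; apply chi_01.
    + apply (chi_mul H).
      * intros; apply (cls_le1 H); auto.
      * intros x y ex ey ec. pose proof (mul_same H x0 x y e0 ex ey ec). split; auto.
        apply (mul_cls H x0 x y e0 ex ey H0).
      * intros x y ex ey ne. apply (mul_diff H x0 x y e0 ex ey ne).
      * intros x y ex ey. pose proof (typ2_mul H x y ex). rewrite ey in H0.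
        apply (F4 H x0 y (op x y) e0); auto. apply (sl_absorb2 H).
    + intro x. rewrite <- phig_chi. apply (phig_bound H x0 P e0 hPd).
  - assert (hno' : forall x, typ theta x <> 1%nat) by (intros x e; apply hno; eauto).
    exists M0, (chi1 theta (fun _ => 0%nat)), (chi2 theta (fun _ => 0%nat)). split; [meq|split; [|split]].
    + intro x; apply chi_01.
    + apply (chi_mul H); intros; exfalso; eapply hno'; eauto.
    + intro x. rewrite <- phig_chi. unfold phig. destruct (typ_spec H x) as [_ [h0' h2]].
      destruct (typ_cases theta x) as [e|[e|e]].
      * rewrite e. replace (Msub (theta x) M0) with (theta x) by meq. specialize (h0' e). lra.
      * exfalso; eapply hno'; eauto.
      * rewrite e. specialize (h2 e). rewrite HS_sub_sym. lra.
Qed.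

Definition deq {I : Type} (x y : I) : {x = y} + {x <> y} := excluded_middle_informative (x = y).

Lemma rsum_app {I} (f : I -> R) l1 l2 : rsum_list f (l1 ++ l2) = rsum_list f l1 + rsum_list f l2.
Proof. induction l1; simpl; [ring | rewrite IHl1; ring]. Qed.
Lemma csum_app {I} (f : I -> C) l1 l2 : csum_list f (l1 ++ l2) = Cadd (csum_list f l1) (csum_list f l2).
Proof. induction l1; simpl. unfold C0; apply Ceq; simpl; ring. rewrite IHl1; ring. Qed.
Lemma rsum_perm {I} (f : I -> R) l1 l2 : Permutation l1 l2 -> rsum_list f l1 = rsum_list f l2.
Proof. induction 1; simpl; try lra. Qed.
Lemma csum_perm {I} (f : I -> C) l1 l2 : Permutation l1 l2 -> csum_list f l1 = csum_list f l2.
Proof. induction 1; simpl; try congruence. ring. Qed.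
Lemma csum_add {I} (f g : I -> C) l : csum_list (fun i => Cadd (f i) (g i)) l = Cadd (csum_list f l) (csum_list g l).
Proof. induction l; simpl. unfold C0; apply Ceq; simpl; ring. rewrite IHl; ring. Qed.
Lemma csum_scale {I} (c : C) (f : I -> C) l : csum_list (fun i => Cmul c (f i)) l = Cmul c (csum_list f l).
Proof. induction l; simpl. unfold C0; apply Ceq; simpl; ring. rewrite IHl; ring. Qed.
Lemma csum_ext {I} (f g : I -> C) l : (forall i, In i l -> f i = g i) -> csum_list f l = csum_list g l.
Proof. induction l; simpl; intros; auto. rewrite H, IHl; auto. Qed.
Lemma rsum_ext {I} (f g : I -> R) l : (forall i, In i l -> f i = g i) -> rsum_list f l = rsum_list g l.
Proof. induction l; simpl; intros; auto. rewrite H, IHl; auto. Qed.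
Lemma rsum_le {I} (f g : I -> R) l : (forall i, f i <= g i) -> rsum_list f l <= rsum_list g l.
Proof. intro H. induction l; simpl; try lra. specialize (H a). lra. Qed.
Lemma rsum_nonneg {I} (f : I -> R) l : (forall i, 0 <= f i) -> 0 <= rsum_list f l.
Proof. intro H. induction l; simpl; try lra. specialize (H a). lra. Qed.
Lemma csum_norm {I} (f : I -> C) l : Cnorm (csum_list f l) <= rsum_list (fun i => Cnorm (f i)) l.
Proof. induction l; simpl. rewrite Cnorm_C0; lra. eapply Rle_trans. apply Cnorm_triangle. lra. Qed.
Lemma rsum_scale {I} (c : R) (f : I -> R) l : rsum_list (fun i => c * f i) l = c * rsum_list f l.
Proof. induction l; simpl; [ring | rewrite IHl; ring]. Qed.
Lemma rsum_add {I} (f g : I -> R) l : rsum_list (fun i => f i + g i) l = rsum_list f l + rsum_list g l.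
Proof. induction l; simpl; [ring | rewrite IHl; ring]. Qed.
Lemma csum_zero {I} (f : I -> C) l : (forall i, In i l -> f i = C0) -> csum_list f l = C0.
Proof. induction l; simpl; intros; auto. rewrite H, IHl; auto. unfold C0; apply Ceq; simpl; ring. Qed.
Lemma rsum_zero {I} (f : I -> R) l : (forall i, In i l -> f i = 0) -> rsum_list f l = 0.
Proof. induction l; simpl; intros; auto. rewrite H, IHl; auto. ring. Qed.

Definition ldiff {I} (l l0 : list I) : list I := filter (fun x => if in_dec deq x l0 then false else true) l.
Lemma ldiff_In {I} (l l0 : list I) x : In x (ldiff l l0) <-> In x l /\ ~ In x l0.
Proof. unfold ldiff. rewrite filter_In. destruct (in_dec deq x l0); intuition congruence. Qed.
Lemma ldiff_NoDup {I} (l l0 : list I) : NoDup l -> NoDup (ldiff l l0).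
Proof. intros; apply NoDup_filter; auto. Qed.
Lemma split_incl {I} (l0 l : list I) : NoDup l0 -> NoDup l -> incl l0 l -> Permutation l (l0 ++ ldiff l l0).
Proof.
  intros h0 h hi. apply NoDup_Permutation; auto.
  - apply NoDup_app; auto. apply ldiff_NoDup; auto. intros a ha hb. apply ldiff_In in hb. tauto.
  - intro x. rewrite in_app_iff, ldiff_In. split.
    + intro hx. destruct (in_dec deq x l0); tauto.
    + intros [hx|[hx _]]; auto.
Qed.
Lemma rsum_incl {I} (f : I -> R) (l0 l : list I) : NoDup l0 -> NoDup l -> incl l0 l -> (forall i, 0 <= f i) ->
  rsum_list f l0 <= rsum_list f l.
Proof. intros h0 h hi hf. rewrite (rsum_perm f _ _ (split_incl l0 l h0 h hi)), rsum_app.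
  pose proof (rsum_nonneg f (ldiff l l0) hf). lra. Qed.

Definition lunion {I} (l1 l2 : list I) : list I := nodup deq (l1 ++ l2).
Lemma lunion_NoDup {I} (l1 l2 : list I) : NoDup (lunion l1 l2).
Proof. apply NoDup_nodup. Qed.
Lemma lunion_l {I} (l1 l2 : list I) : incl l1 (lunion l1 l2).
Proof. intros x hx. unfold lunion. apply nodup_In. apply in_app_iff; auto. Qed.
Lemma lunion_r {I} (l1 l2 : list I) : incl l2 (lunion l1 l2).
Proof. intros x hx. unfold lunion. apply nodup_In. apply in_app_iff; auto. Qed.

Definition sums {I} (g : I -> R) : R -> Prop := fun r => exists l, NoDup l /\ r = rsum_list g l.
Definition bnd {I} (g : I -> R) : Prop := exists B, forall l, NoDup l -> rsum_list g l <= B.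
Definition Ssup {I} (g : I -> R) : R := epsilon (inhabits 0) (fun L => is_lub (sums g) L).

Lemma Ssup_lub {I} (g : I -> R) : bnd g -> is_lub (sums g) (Ssup g).
Proof.
  intros [B hB]. unfold Ssup. apply epsilon_spec.
  destruct (completeness (sums g)) as [L hL].
  - exists B. intros r [l [hl ->]]. auto.
  - exists 0, []. split. constructor. reflexivity.
  - exists L; auto.
Qed.
Lemma Ssup_ge {I} (g : I -> R) l : bnd g -> NoDup l -> rsum_list g l <= Ssup g.
Proof. intros hb hl. destruct (Ssup_lub g hb) as [h _]. apply h. exists l; auto. Qed.
Lemma Ssup_le {I} (g : I -> R) B : bnd g -> (forall l, NoDup l -> rsum_list g l <= B) -> Ssup g <= B.
Proof. intros hb hB. destruct (Ssup_lub g hb) as [_ h]. apply h. intros r [l [hl ->]]. auto. Qed.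
Lemma Ssup_nonneg {I} (g : I -> R) : bnd g -> 0 <= Ssup g.
Proof. intros hb. apply (Ssup_ge g [] hb). constructor. Qed.
Lemma Ssup_approx {I} (g : I -> R) eps : bnd g -> 0 < eps -> exists l, NoDup l /\ Ssup g - eps < rsum_list g l.
Proof.
  intros hb he. destruct (Classical_Prop.classic (exists l, NoDup l /\ Ssup g - eps < rsum_list g l)) as [h|h]; auto.
  exfalso. assert (Ssup g <= Ssup g - eps).
  { apply Ssup_le; auto. intros l hl. destruct (Rle_dec (rsum_list g l) (Ssup g - eps)); auto.
    exfalso; apply h; exists l; split; auto; lra. }
  lra.
Qed.

Lemma tail_bound {I} (g : I -> R) l0 l : bnd g -> (forall i, 0 <= g i) -> NoDup l0 -> NoDup l ->
  (forall x, In x l -> ~ In x l0) -> rsum_list g l <= Ssup g - rsum_list g l0.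
Proof.
  intros hb hg h0 h hd. pose proof (Ssup_ge g (l0 ++ l) hb). rewrite rsum_app in H.
  assert (NoDup (l0 ++ l)). { apply NoDup_app; auto. intros a ha hb'. apply (hd a hb' ha). }
  specialize (H H0). lra.
Qed.

Lemma bnd_le {I} (f g : I -> R) : bnd g -> (forall i, f i <= g i) -> bnd f.
Proof. intros [B hB] h. exists B. intros l hl. eapply Rle_trans. apply rsum_le; eauto. auto. Qed.

Definition rhas_sum {I} (g : I -> R) (L : R) : Prop :=
  forall eps, 0 < eps -> exists l0, NoDup l0 /\
    forall l, NoDup l -> incl l0 l -> Rabs (rsum_list g l - L) < eps.

Lemma rhas_sum_exists {I} (g : I -> R) : bnd (fun i => Rabs (g i)) -> exists L, rhas_sum g L.
Proof.
  intro hb.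
  set (gp := fun i => Rmax (g i) 0). set (gm := fun i => Rmax (- g i) 0).
  assert (hp : bnd gp) by (apply (bnd_le _ _ hb); intro i; unfold gp, Rmax, Rabs; destruct Rle_dec; destruct Rcase_abs; lra).
  assert (hm : bnd gm) by (apply (bnd_le _ _ hb); intro i; unfold gm, Rmax, Rabs; destruct Rle_dec; destruct Rcase_abs; lra).
  assert (hp0 : forall i, 0 <= gp i) by (intro i; unfold gp, Rmax; destruct Rle_dec; lra).
  assert (hm0 : forall i, 0 <= gm i) by (intro i; unfold gm, Rmax; destruct Rle_dec; lra).
  assert (hg : forall l, rsum_list g l = rsum_list gp l - rsum_list gm l).
  { intro l. rewrite <- (rsum_ext (fun i => gp i - gm i)). 
    - induction l; simpl; [ring|rewrite IHl; ring].
    - intros i _. unfold gp, gm, Rmax. destruct Rle_dec; destruct Rle_dec; lra. }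
  exists (Ssup gp - Ssup gm). intros eps he.
  destruct (Ssup_approx gp (eps/3) hp ltac:(lra)) as [l1 [hl1 h1]].
  destruct (Ssup_approx gm (eps/3) hm ltac:(lra)) as [l2 [hl2 h2]].
  exists (lunion l1 l2). split. apply lunion_NoDup. intros l hl hi.
  pose proof (rsum_incl gp l1 l hl1 hl (fun x hx => hi x (lunion_l l1 l2 x hx)) hp0).
  pose proof (rsum_incl gm l2 l hl2 hl (fun x hx => hi x (lunion_r l1 l2 x hx)) hm0).
  pose proof (Ssup_ge gp l hp hl). pose proof (Ssup_ge gm l hm hl).
  rewrite hg. unfold Rabs; destruct Rcase_abs; lra.
Qed.

Definition csummable {I} (f : I -> C) : Prop := bnd (fun i => Cnorm (f i)).

Lemma Cnorm_le_parts z : Cnorm z <= Rabs (fst z) + Rabs (snd z).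
Proof. apply sqrt_le_sq. pose proof (Rabs_pos (fst z)); pose proof (Rabs_pos (snd z)); lra.
  unfold Cnorm2. pose proof (Rabs_pos (fst z)); pose proof (Rabs_pos (snd z)).
  pose proof (Rsqr_abs (fst z)); pose proof (Rsqr_abs (snd z)). unfold Rsqr in *. nra. Qed.

Lemma parts_le_Cnorm z : Rabs (fst z) <= Cnorm z /\ Rabs (snd z) <= Cnorm z.
Proof. destruct z as [x y]. unfold Cnorm, Cnorm2; simpl. split; rewrite <- sqrt_Rsqr_abs; apply sqrt_le_1_alt;
  unfold Rsqr; pose proof (Rle_0_sqr x); pose proof (Rle_0_sqr y); unfold Rsqr in *; lra. Qed.

Lemma csum_parts {I} (f : I -> C) l : csum_list f l = (rsum_list (fun i => fst (f i)) l, rsum_list (fun i => snd (f i)) l).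
Proof. induction l; simpl. reflexivity. rewrite IHl. reflexivity. Qed.

Lemma has_sum_exists {I} (f : I -> C) : csummable f -> exists L, has_sum f L.
Proof.
  intro hb.
  destruct (rhas_sum_exists (fun i => fst (f i))) as [Lr hr].
  { apply (bnd_le _ _ hb). intro i. apply parts_le_Cnorm. }
  destruct (rhas_sum_exists (fun i => snd (f i))) as [Li hi].
  { apply (bnd_le _ _ hb). intro i. apply parts_le_Cnorm. }
  exists (Lr, Li). intros eps he.
  destruct (hr (eps/2) ltac:(lra)) as [l1 [hl1 h1]]. destruct (hi (eps/2) ltac:(lra)) as [l2 [hl2 h2]].
  exists (lunion l1 l2). split. apply lunion_NoDup. intros l hl hinc.
  specialize (h1 l hl (fun x hx => hinc x (lunion_l l1 l2 x hx))).
  specialize (h2 l hl (fun x hx => hinc x (lunion_r l1 l2 x hx))).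
  eapply Rle_lt_trans. apply Cnorm_le_parts. rewrite csum_parts. unfold Csub, Cadd, Copp; simpl. unfold Rminus in h1, h2. lra.
Qed.

Lemma has_sum_unique {I} (f : I -> C) A B : has_sum f A -> has_sum f B -> A = B.
Proof.
  intros hA hB.
  assert (forall eps, 0 < eps -> Cnorm (Csub A B) < eps).
  { intros eps he. destruct (hA (eps/2) ltac:(lra)) as [l1 [hl1 h1]]. destruct (hB (eps/2) ltac:(lra)) as [l2 [hl2 h2]].
    set (l := lunion l1 l2).
    specialize (h1 l (lunion_NoDup _ _) (lunion_l _ _)). specialize (h2 l (lunion_NoDup _ _) (lunion_r _ _)).
    replace (Csub A B) with (Csub (Csub (csum_list f l) B) (Csub (csum_list f l) A)) by ring.
    eapply Rle_lt_trans. unfold Csub at 1. apply Cnorm_triangle. rewrite Cnorm_opp. lra. }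
  destruct (Req_dec (Cnorm (Csub A B)) 0) as [e|ne].
  - apply Cnorm_eq0 in e. transitivity (Cadd (Csub A B) B). ring. rewrite e. ring.
  - pose proof (Cnorm_nonneg (Csub A B)). specialize (H (Cnorm (Csub A B)) ltac:(lra)). lra.
Qed.

Lemma usum_eq {I} (f : I -> C) A : has_sum f A -> usum f = A.
Proof. intro h. unfold usum. apply (has_sum_unique f). apply epsilon_spec. eauto. auto. Qed.
Lemma usum_spec {I} (f : I -> C) : csummable f -> has_sum f (usum f).
Proof. intro h. destruct (has_sum_exists f h) as [L hL]. rewrite (usum_eq f L hL). auto. Qed.

Lemma has_sum_add {I} (f g : I -> C) A B : has_sum f A -> has_sum g B -> has_sum (fun i => Cadd (f i) (g i)) (Cadd A B).
Proof.
  intros hA hB eps he. destruct (hA (eps/2) ltac:(lra)) as [l1 [hl1 h1]]. destruct (hB (eps/2) ltac:(lra)) as [l2 [hl2 h2]].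
  exists (lunion l1 l2). split. apply lunion_NoDup. intros l hl hinc.
  specialize (h1 l hl (fun x hx => hinc x (lunion_l l1 l2 x hx))).
  specialize (h2 l hl (fun x hx => hinc x (lunion_r l1 l2 x hx))).
  rewrite csum_add. replace (Csub (Cadd (csum_list f l) (csum_list g l)) (Cadd A B))
    with (Cadd (Csub (csum_list f l) A) (Csub (csum_list g l) B)) by ring.
  eapply Rle_lt_trans. apply Cnorm_triangle. lra.
Qed.

Lemma has_sum_scale {I} (c : C) (f : I -> C) A : has_sum f A -> has_sum (fun i => Cmul c (f i)) (Cmul c A).
Proof.
  intros hA eps he. destruct (hA (eps/(Cnorm c + 1))) as [l1 [hl1 h1]].
  { apply Rdiv_lt_0_compat; auto. pose proof (Cnorm_nonneg c); lra. }
  exists l1. split; auto. intros l hl hinc. specialize (h1 l hl hinc).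
  rewrite csum_scale. replace (Csub (Cmul c (csum_list f l)) (Cmul c A)) with (Cmul c (Csub (csum_list f l) A)) by ring.
  rewrite Cnorm_mul. pose proof (Cnorm_nonneg c). pose proof (Cnorm_nonneg (Csub (csum_list f l) A)).
  apply Rmult_lt_compat_r with (r := Cnorm c + 1) in h1; [|lra].
  unfold Rdiv in h1. rewrite Rmult_assoc, Rinv_l in h1 by lra. nra.
Qed.

Lemma has_sum_finite {I} (f : I -> C) l0 : NoDup l0 -> (forall i, ~ In i l0 -> f i = C0) -> has_sum f (csum_list f l0).
Proof.
  intros h0 hz eps he. exists l0. split; auto. intros l hl hinc.
  rewrite (csum_perm f _ _ (split_incl l0 l h0 hl hinc)), csum_app.
  rewrite (csum_zero f (ldiff l l0)). replace (Csub (Cadd (csum_list f l0) C0) (csum_list f l0)) with C0 by ring.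
  rewrite Cnorm_C0; auto. intros i hi. apply hz. apply ldiff_In in hi. tauto.
Qed.

Lemma csummable_le {I} (f : I -> C) (g : I -> R) : bnd g -> (forall i, Cnorm (f i) <= g i) -> csummable f.
Proof. intros; eapply bnd_le; eauto. Qed.

Lemma usum_bound {I} (f : I -> C) : csummable f -> Cnorm (usum f) <= Ssup (fun i => Cnorm (f i)).
Proof.
  intro h. pose proof (usum_spec f h).
  destruct (Rle_dec (Cnorm (usum f)) (Ssup (fun i => Cnorm (f i)))) as [|n]; auto. exfalso.
  set (e := Cnorm (usum f) - Ssup (fun i => Cnorm (f i))).
  destruct (H e ltac:(unfold e; lra)) as [l0 [hl0 h0]]. specialize (h0 l0 hl0 (incl_refl _)).
  pose proof (csum_norm f l0). pose proof (Ssup_ge _ l0 h hl0).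
  pose proof (Cnorm_triangle_sub (usum f) (csum_list f l0)). unfold e in *. rewrite Cnorm_sub_sym in h0. lra.
Qed.

Lemma NoDup_map_pair {X Y} (x : X) (l : list Y) : NoDup l -> NoDup (map (fun y => (x, y)) l).
Proof. induction 1; simpl; constructor; auto. intro h. apply in_map_iff in h. destruct h as [y [e hy]].
  inversion e; subst; auto. Qed.

Lemma NoDup_prod {X Y} (l1 : list X) (l2 : list Y) : NoDup l1 -> NoDup l2 -> NoDup (list_prod l1 l2).
Proof.
  intros h1 h2. induction h1; simpl. constructor.
  apply NoDup_app; auto. apply NoDup_map_pair; auto.
  intros [p q] hp hq. apply in_map_iff in hp. destruct hp as [y [e _]]. inversion e; subst.
  apply in_prod_iff in hq. tauto.
Qed.

Lemma rsum_map {A B} (g : B -> R) (h : A -> B) l : rsum_list g (map h l) = rsum_list (fun x => g (h x)) l.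
Proof. induction l; simpl; auto. rewrite IHl; auto. Qed.

Lemma rsum_prod {X Y} (g1 : X -> R) (g2 : Y -> R) l1 l2 :
  rsum_list (fun p => g1 (fst p) * g2 (snd p)) (list_prod l1 l2) = rsum_list g1 l1 * rsum_list g2 l2.
Proof.
  induction l1; simpl. ring. rewrite rsum_app, IHl1, rsum_map. simpl. rewrite rsum_scale. ring.
Qed.
Lemma csum_map {A B} (g : B -> C) (h : A -> B) l : csum_list g (map h l) = csum_list (fun x => g (h x)) l.
Proof. induction l; simpl; auto. rewrite IHl; auto. Qed.
Lemma csum_prod {X Y} (g1 : X -> C) (g2 : Y -> C) l1 l2 :
  csum_list (fun p => Cmul (g1 (fst p)) (g2 (snd p))) (list_prod l1 l2) = Cmul (csum_list g1 l1) (csum_list g2 l2).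
Proof.
  induction l1; simpl. unfold C0; apply Ceq; simpl; ring. rewrite csum_app, IHl1, csum_map. simpl. rewrite csum_scale. ring.
Qed.

Lemma prod_bound {X Y} (a : X -> R) (b : Y -> R) (l : list (X * Y)) :
  (forall x, 0 <= a x) -> (forall y, 0 <= b y) -> NoDup l ->
  rsum_list (fun p => a (fst p) * b (snd p)) l <=
  rsum_list a (nodup deq (map fst l)) * rsum_list b (nodup deq (map snd l)).
Proof.
  intros ha hb hl. rewrite <- rsum_prod. apply rsum_incl; auto.
  - apply NoDup_prod; apply NoDup_nodup.
  - intros [x y] hp. apply in_prod; apply nodup_In; apply in_map_iff; exists (x,y); auto.
  - intro p. apply Rmult_le_pos; auto.
Qed.

Lemma has_sum_prod {X Y} (a : X -> C) (b : Y -> C) :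
  csummable a -> csummable b ->
  csummable (fun p : X * Y => Cmul (a (fst p)) (b (snd p))) /\
  has_sum (fun p : X * Y => Cmul (a (fst p)) (b (snd p))) (Cmul (usum a) (usum b)).
Proof.
  intros ha hb.
  set (Ba := Ssup (fun x => Cnorm (a x))). set (Bb := Ssup (fun y => Cnorm (b y))).
  assert (hBa : 0 <= Ba) by (apply Ssup_nonneg; auto). assert (hBb : 0 <= Bb) by (apply Ssup_nonneg; auto).
  assert (hbnd : forall l, NoDup l -> rsum_list (fun p : X * Y => Cnorm (Cmul (a (fst p)) (b (snd p)))) l <=
     rsum_list (fun x => Cnorm (a x)) (nodup deq (map fst l)) * rsum_list (fun y => Cnorm (b y)) (nodup deq (map snd l))).
  { intros l hl. rewrite (rsum_ext _ (fun p => Cnorm (a (fst p)) * Cnorm (b (snd p)))).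
    apply (prod_bound (fun x => Cnorm (a x)) (fun y => Cnorm (b y))); auto; intros; apply Cnorm_nonneg. intros; apply Cnorm_mul. }
  split.
  { exists (Ba * Bb). intros l hl. eapply Rle_trans. apply hbnd; auto.
    apply Rmult_le_compat; try (apply rsum_nonneg; intros; apply Cnorm_nonneg);
    apply Ssup_ge; auto; apply NoDup_nodup. }
  intros eps he.
  set (eta := Rmin 1 (eps / (4 * (Ba + Bb + 2)))).
  assert (het : 0 < eta). { unfold eta. apply Rmin_pos. lra. apply Rdiv_lt_0_compat; lra. }
  assert (het1 : eta <= 1) by apply Rmin_l.
  assert (het2 : eta * (4 * (Ba + Bb + 2)) <= eps).
  { unfold eta. pose proof (Rmin_r 1 (eps / (4 * (Ba + Bb + 2)))).
    apply Rmult_le_compat_r with (r := 4 * (Ba + Bb + 2)) in H; [|lra].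
    unfold Rdiv in H. rewrite Rmult_assoc, Rinv_l in H by lra. lra. }
  destruct (usum_spec a ha eta het) as [xa [hxa sa]].
  destruct (usum_spec b hb eta het) as [yb [hyb sb]].
  destruct (Ssup_approx _ eta ha het) as [xt [hxt tx]].
  destruct (Ssup_approx _ eta hb het) as [yt [hyt ty]].
  set (X0 := lunion xa xt). set (Y0 := lunion yb yt).
  assert (hX0 : NoDup X0) by apply lunion_NoDup. assert (hY0 : NoDup Y0) by apply lunion_NoDup.
  assert (tailX : forall l, NoDup l -> (forall x, In x l -> ~ In x X0) -> rsum_list (fun x => Cnorm (a x)) l <= eta).
  { intros l hl hd. pose proof (tail_bound (fun x => Cnorm (a x)) X0 l ha (fun _ => Cnorm_nonneg _) hX0 hl hd).
    pose proof (rsum_incl (fun x => Cnorm (a x)) xt X0 hxt hX0 (lunion_r _ _) (fun _ => Cnorm_nonneg _)). fold Ba in H, tx. lra. }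
  assert (tailY : forall l, NoDup l -> (forall y, In y l -> ~ In y Y0) -> rsum_list (fun y => Cnorm (b y)) l <= eta).
  { intros l hl hd. pose proof (tail_bound (fun y => Cnorm (b y)) Y0 l hb (fun _ => Cnorm_nonneg _) hY0 hl hd).
    pose proof (rsum_incl (fun y => Cnorm (b y)) yt Y0 hyt hY0 (lunion_r _ _) (fun _ => Cnorm_nonneg _)). fold Bb in H, ty. lra. }
  specialize (sa X0 hX0 (lunion_l _ _)). specialize (sb Y0 hY0 (lunion_l _ _)).
  exists (list_prod X0 Y0). split. apply NoDup_prod; auto.
  intros l hl hinc.
  set (F := fun p : X * Y => Cmul (a (fst p)) (b (snd p))).
  rewrite (csum_perm F _ _ (split_incl _ l (NoDup_prod _ _ hX0 hY0) hl hinc)), csum_app.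
  unfold F at 1. rewrite csum_prod.
  set (r := ldiff l (list_prod X0 Y0)).
  assert (hr : NoDup r) by (apply ldiff_NoDup; auto).
  set (r1 := filter (fun p => if in_dec deq (fst p) X0 then false else true) r).
  set (r2 := filter (fun p => if in_dec deq (fst p) X0 then true else false) r).
  assert (hperm : Permutation r (r1 ++ r2)).
  { apply NoDup_Permutation; auto.
    - apply NoDup_app; try apply NoDup_filter; auto. intros p hp1 hp2. unfold r1, r2 in *.
      apply filter_In in hp1; apply filter_In in hp2. destruct (in_dec deq (fst p) X0); intuition congruence.
    - intro p. rewrite in_app_iff. unfold r1, r2. rewrite !filter_In.
      destruct (in_dec deq (fst p) X0); intuition congruence. }
  assert (h1 : rsum_list (fun p => Cnorm (F p)) r1 <= eta * Bb).
  { eapply Rle_trans. apply hbnd. apply NoDup_filter; auto.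
    apply Rmult_le_compat; try (apply rsum_nonneg; intros; apply Cnorm_nonneg).
    - apply tailX. apply NoDup_nodup. intros x hx. rewrite nodup_In, in_map_iff in hx.
      destruct hx as [p [<- hp]]. unfold r1 in hp. apply filter_In in hp. destruct (in_dec deq (fst p) X0); intuition congruence.
    - apply Ssup_ge; auto. apply NoDup_nodup. }
  assert (h2 : rsum_list (fun p => Cnorm (F p)) r2 <= Ba * eta).
  { eapply Rle_trans. apply hbnd. apply NoDup_filter; auto.
    apply Rmult_le_compat; try (apply rsum_nonneg; intros; apply Cnorm_nonneg).
    - apply Ssup_ge; auto. apply NoDup_nodup.
    - apply tailY. apply NoDup_nodup. intros y hy hy0. rewrite nodup_In, in_map_iff in hy.
      destruct hy as [p [<- hp]]. unfold r2 in hp. apply filter_In in hp. destruct hp as [hp hp'].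
      destruct (in_dec deq (fst p) X0) as [hx|]; try congruence.
      unfold r in hp. apply ldiff_In in hp. destruct hp as [_ hp]. apply hp. destruct p; apply in_prod; auto. }
  assert (hrr : Cnorm (csum_list F r) <= eta * Bb + Ba * eta).
  { eapply Rle_trans. apply csum_norm. rewrite (rsum_perm _ _ _ hperm), rsum_app. lra. }
  set (sA := csum_list a X0) in *. set (sB := csum_list b Y0) in *.
  assert (hsB : Cnorm sB <= Bb).
  { eapply Rle_trans. apply csum_norm. apply Ssup_ge; auto. }
  replace (Csub (Cadd (Cmul sA sB) (csum_list F r)) (Cmul (usum a) (usum b)))
    with (Cadd (Cadd (Cmul (Csub sA (usum a)) sB) (Cmul (usum a) (Csub sB (usum b)))) (csum_list F r)) by ring.
  eapply Rle_lt_trans. apply Cnorm_triangle. eapply Rle_lt_trans. apply Rplus_le_compat_r. apply Cnorm_triangle.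
  rewrite !Cnorm_mul.
  pose proof (usum_bound a ha). fold Ba in H.
  pose proof (Cnorm_nonneg (Csub sA (usum a))). pose proof (Cnorm_nonneg sB). pose proof (Cnorm_nonneg (usum a)).
  pose proof (Cnorm_nonneg (Csub sB (usum b))).
  assert (Cnorm (Csub sA (usum a)) * Cnorm sB <= eta * Bb) by (apply Rmult_le_compat; lra).
  assert (Cnorm (usum a) * Cnorm (Csub sB (usum b)) <= Ba * eta) by (apply Rmult_le_compat; lra).
  assert (eta * Bb + Ba * eta + (eta * Bb + Ba * eta) < eps).
  { assert (eta * (Ba + Bb) * 2 <= eta * (4 * (Ba + Bb + 2)) - eta) by nra. lra. }
  lra.
Qed.

Definition fib {I S} (pi : I -> S) (F : I -> C) (s : S) : I -> C :=
  fun i => if excluded_middle_informative (pi i = s) then F i else C0.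

Lemma rsum_le_in {I} (f g : I -> R) l : (forall i, In i l -> f i <= g i) -> rsum_list f l <= rsum_list g l.
Proof. induction l; simpl; intros; try lra. pose proof (H a (or_introl eq_refl)).
  assert (rsum_list f l <= rsum_list g l) by (apply IHl; auto). lra. Qed.

Lemma rsum_const {I} (c : R) (l : list I) : rsum_list (fun _ => c) l = INR (length l) * c.
Proof. induction l; simpl length; simpl rsum_list. simpl; ring. rewrite IHl, S_INR. ring. Qed.

Lemma csum_swap {A B} (F : A -> B -> C) (l1 : list A) (l2 : list B) :
  csum_list (fun a => csum_list (F a) l2) l1 = csum_list (fun b => csum_list (fun a => F a b) l1) l2.
Proof.
  induction l1; simpl.
  - rewrite csum_zero; auto.
  - rewrite IHl1. clear IHl1. induction l2; simpl. unfold C0; apply Ceq; simpl; ring.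
    rewrite <- IHl2. ring.
Qed.

Lemma csum_indicator {S} (x : S) (v : C) (L : list S) : NoDup L -> In x L ->
  csum_list (fun s => if excluded_middle_informative (x = s) then v else C0) L = v.
Proof.
  induction 1; simpl; intros hin. contradiction.
  destruct (excluded_middle_informative (x = x0)) as [e|ne].
  - subst. rewrite csum_zero. ring. intros i hi. destruct excluded_middle_informative; auto. subst; contradiction.
  - destruct hin as [e|hin]. subst; contradiction. rewrite IHNoDup; auto. ring.
Qed.

Lemma csum_sub {I} (f g : I -> C) l : csum_list (fun i => Csub (f i) (g i)) l = Csub (csum_list f l) (csum_list g l).
Proof. induction l; simpl. unfold C0; apply Ceq; simpl; ring. rewrite IHl; ring. Qed.

Lemma regroup {I S} (pi : I -> S) (F : I -> C) (L : list S) (l0 : list I) :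
  NoDup L -> (forall i, In i l0 -> In (pi i) L) ->
  csum_list (fun s => csum_list (fib pi F s) l0) L = csum_list F l0.
Proof.
  intros hL hin. unfold fib. rewrite csum_swap. apply csum_ext. intros i hi.
  apply csum_indicator; auto.
Qed.

Lemma NoDup_flat_map_fib {I S} (pi : I -> S) (h : S -> list I) (L : list S) :
  NoDup L -> (forall s, NoDup (h s)) -> (forall s i, In i (h s) -> pi i = s) -> NoDup (flat_map h L).
Proof.
  induction 1; simpl; intros hn hp. constructor.
  apply NoDup_app; auto. intros i hi hi2. apply in_flat_map in hi2. destruct hi2 as [s [hs hi2]].
  apply hp in hi. apply hp in hi2. subst. congruence.
Qed.

Lemma rsum_flat_map {I S} (g : I -> R) (h : S -> list I) (L : list S) :
  rsum_list g (flat_map h L) = rsum_list (fun s => rsum_list g (h s)) L.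
Proof. induction L; simpl; auto. rewrite rsum_app, IHL; auto. Qed.

Lemma rsum_fib {I S} (pi : I -> S) (F : I -> C) s l :
  rsum_list (fun i => Cnorm (fib pi F s i)) l =
  rsum_list (fun i => Cnorm (F i)) (filter (fun i => if excluded_middle_informative (pi i = s) then true else false) l).
Proof. induction l; simpl; auto. unfold fib at 1. destruct excluded_middle_informative; simpl; rewrite IHl; auto.
  rewrite Cnorm_C0. ring. Qed.

Lemma csummable_fib {I S} (pi : I -> S) (F : I -> C) s : csummable F -> csummable (fib pi F s).
Proof. intro h. apply (csummable_le _ (fun i => Cnorm (F i))); auto. intro i. unfold fib.
  destruct excluded_middle_informative. lra. rewrite Cnorm_C0. apply Cnorm_nonneg. Qed.

Lemma fiber_sum {I S} (pi : I -> S) (F : I -> C) : csummable F ->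
  has_sum (fun s => usum (fib pi F s)) (usum F).
Proof.
  intros hF eps he.
  set (B := Ssup (fun i => Cnorm (F i))).
  destruct (Ssup_approx _ (eps/4) hF ltac:(lra)) as [la [hla ta]].
  destruct (usum_spec F hF (eps/4) ltac:(lra)) as [lb [hlb sb]].
  set (l0 := lunion la lb).
  assert (hl0 : NoDup l0) by apply lunion_NoDup.
  assert (tail : forall l, NoDup l -> (forall x, In x l -> ~ In x l0) -> rsum_list (fun i => Cnorm (F i)) l < eps/4).
  { intros l hl hd. pose proof (tail_bound (fun i => Cnorm (F i)) l0 l hF (fun _ => Cnorm_nonneg _) hl0 hl hd).
    pose proof (rsum_incl (fun i => Cnorm (F i)) la l0 hla hl0 (lunion_l _ _) (fun _ => Cnorm_nonneg _)).
    fold B in H, ta. lra. }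
  specialize (sb l0 hl0 (lunion_r _ _)).
  exists (nodup deq (map pi l0)). split. apply NoDup_nodup.
  intros L hL hinc.
  set (eta := eps / (4 * (INR (length L) + 1))).
  assert (hn : 0 <= INR (length L)) by apply pos_INR.
  assert (het : 0 < eta) by (unfold eta; apply Rdiv_lt_0_compat; lra).
  assert (hetn : INR (length L) * eta < eps / 4).
  { unfold eta. unfold Rdiv. rewrite Rinv_mult.
    assert (INR (length L) * / (INR (length L) + 1) < 1).
    { apply Rmult_lt_reg_r with (INR (length L) + 1). lra. rewrite Rmult_assoc, Rinv_l by lra. lra. }
    assert (0 < / 4 * eps) by (apply Rmult_lt_0_compat; lra).
    replace (INR (length L) * (eps * (/ 4 * / (INR (length L) + 1)))) with ((INR (length L) * / (INR (length L) + 1)) * (/4 * eps)) by ring.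
    nra. }
  assert (hms : forall s, {m : list I | NoDup m /\ forall l, NoDup l -> incl m l ->
                   Cnorm (Csub (csum_list (fib pi F s) l) (usum (fib pi F s))) < eta}).
  { intro s. apply constructive_indefinite_description. apply (usum_spec _ (csummable_fib pi F s hF)). auto. }
  set (ms := fun s => proj1_sig (hms s)).
  set (rs := fun s => filter (fun i => if excluded_middle_informative (pi i = s) then true else false) (ldiff (lunion l0 (ms s)) l0)).
  assert (hrs_nd : NoDup (flat_map rs L)).
  { apply NoDup_flat_map_fib with pi; auto.
    - intro s. apply NoDup_filter, ldiff_NoDup, lunion_NoDup.
    - intros s i hi. unfold rs in hi. apply filter_In in hi. destruct hi as [_ hi]. destruct excluded_middle_informative; congruence. }
  assert (hrs_out : forall x, In x (flat_map rs L) -> ~ In x l0).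
  { intros x hx. apply in_flat_map in hx. destruct hx as [s [_ hx]]. unfold rs in hx. apply filter_In in hx.
    destruct hx as [hx _]. apply ldiff_In in hx. tauto. }
  pose proof (tail _ hrs_nd hrs_out) as htail. rewrite rsum_flat_map in htail.
  assert (hper : forall s, Cnorm (Csub (usum (fib pi F s)) (csum_list (fib pi F s) l0)) <=
                   eta + rsum_list (fun i => Cnorm (F i)) (rs s)).
  { intro s. destruct (proj2_sig (hms s)) as [hm hm2]. fold (ms s) in hm, hm2.
    set (ls := lunion l0 (ms s)).
    specialize (hm2 ls (lunion_NoDup _ _) (lunion_r _ _)).
    assert (E : csum_list (fib pi F s) ls = Cadd (csum_list (fib pi F s) l0) (csum_list (fib pi F s) (ldiff ls l0))).
    { rewrite (csum_perm _ _ _ (split_incl l0 ls hl0 (lunion_NoDup _ _) (lunion_l _ _))), csum_app. auto. }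
    rewrite E in hm2.
    replace (Csub (usum (fib pi F s)) (csum_list (fib pi F s) l0)) with
      (Cadd (Copp (Csub (Cadd (csum_list (fib pi F s) l0) (csum_list (fib pi F s) (ldiff ls l0))) (usum (fib pi F s))))
            (csum_list (fib pi F s) (ldiff ls l0))) by ring.
    eapply Rle_trans. apply Cnorm_triangle. rewrite Cnorm_opp.
    pose proof (csum_norm (fib pi F s) (ldiff ls l0)). rewrite rsum_fib in H. unfold rs. fold ls. lra. }
  assert (hreg : csum_list (fun s => csum_list (fib pi F s) l0) L = csum_list F l0).
  { apply regroup; auto. intros i hi. apply hinc. apply nodup_In. apply in_map; auto. }
  replace (Csub (csum_list (fun s => usum (fib pi F s)) L) (usum F)) with
    (Cadd (csum_list (fun s => Csub (usum (fib pi F s)) (csum_list (fib pi F s) l0)) L)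
          (Csub (csum_list F l0) (usum F))).
  2:{ rewrite csum_sub, hreg. ring. }
  eapply Rle_lt_trans. apply Cnorm_triangle.
  eapply Rle_lt_trans. apply Rplus_le_compat_r. apply csum_norm.
  eapply Rle_lt_trans. apply Rplus_le_compat_r. apply (rsum_le_in _ (fun s => eta + rsum_list (fun i => Cnorm (F i)) (rs s))).
  intros s _. apply hper.
  rewrite rsum_add, rsum_const. lra.
Qed.

Lemma N_scale N (hN : is_norm_M2 N) c A : N (Mscale c A) = Cnorm c * N A.
Proof. destruct hN as [_ [_ [_ h]]]. apply h. Qed.
Lemma N_tri N (hN : is_norm_M2 N) A B : N (Madd A B) <= N A + N B.
Proof. destruct hN as [_ [_ [h _]]]. apply h. Qed.
Lemma N_nonneg N (hN : is_norm_M2 N) A : 0 <= N A.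
Proof. destruct hN as [h _]. apply h. Qed.
Lemma N_zero N (hN : is_norm_M2 N) A : N A = 0 -> A = M0.
Proof. destruct hN as [_ [h _]]. apply h. Qed.
Lemma N_sub_sym N (hN : is_norm_M2 N) A B : N (Msub A B) = N (Msub B A).
Proof. replace (Msub A B) with (Mscale (-1,0) (Msub B A)) by meq. rewrite N_scale by auto.
  rewrite Cnorm_real, Rabs_left by lra. ring. Qed.
Lemma N_sub_tri N (hN : is_norm_M2 N) A B D : N (Msub A D) <= N (Msub A B) + N (Msub B D).
Proof. replace (Msub A D) with (Madd (Msub A B) (Msub B D)) by meq. apply N_tri; auto. Qed.
Lemma N_M0 N (hN : is_norm_M2 N) : N M0 = 0.
Proof. replace M0 with (Mscale C0 M0) by meq. rewrite N_scale, Cnorm_C0 by auto. ring. Qed.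

Definition E11 := mkM2 C1 C0 C0 C0.
Definition E12 := mkM2 C0 C1 C0 C0.
Definition E21 := mkM2 C0 C0 C1 C0.
Definition E22 := mkM2 C0 C0 C0 C1.

Lemma Cnorm_entry_le A : Cnorm (m11 A) <= HS A /\ Cnorm (m12 A) <= HS A /\ Cnorm (m21 A) <= HS A /\ Cnorm (m22 A) <= HS A.
Proof.
  rewrite HS_expand. pose proof (Cnorm_nonneg (m11 A)); pose proof (Cnorm_nonneg (m12 A));
  pose proof (Cnorm_nonneg (m21 A)); pose proof (Cnorm_nonneg (m22 A)).
  assert (forall x S, 0 <= x -> x * x <= S -> x <= sqrt S).
  { intros x S hx hS. rewrite <- (sqrt_square x) by auto. apply sqrt_le_1_alt; auto. }
  repeat split; apply H3; auto; nra.
Qed.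

Lemma N_upper N (hN : is_norm_M2 N) : exists L, 0 < L /\ forall A, N A <= L * HS A.
Proof.
  exists (N E11 + N E12 + N E21 + N E22 + 1).
  pose proof (N_nonneg N hN E11); pose proof (N_nonneg N hN E12);
  pose proof (N_nonneg N hN E21); pose proof (N_nonneg N hN E22).
  split. lra. intro A.
  replace A with (Madd (Madd (Madd (Mscale (m11 A) E11) (Mscale (m12 A) E12)) (Mscale (m21 A) E21)) (Mscale (m22 A) E22)) at 1
    by (destruct A; unfold E11, E12, E21, E22, C1, C0; apply M2eq; unfold Madd, Mscale; simpl; apply Ceq; simpl; ring).
  eapply Rle_trans. apply N_tri; auto. eapply Rle_trans. apply Rplus_le_compat_r. apply N_tri; auto.
  eapply Rle_trans. apply Rplus_le_compat_r. apply Rplus_le_compat_r. apply N_tri; auto.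
  rewrite !N_scale by auto. destruct (Cnorm_entry_le A) as [h1 [h2 [h3 h4]]].
  pose proof (HS_nonneg A).
  assert (Cnorm (m11 A) * N E11 <= HS A * N E11) by (apply Rmult_le_compat_r; auto).
  assert (Cnorm (m12 A) * N E12 <= HS A * N E12) by (apply Rmult_le_compat_r; auto).
  assert (Cnorm (m21 A) * N E21 <= HS A * N E21) by (apply Rmult_le_compat_r; auto).
  assert (Cnorm (m22 A) * N E22 <= HS A * N E22) by (apply Rmult_le_compat_r; auto).
  nra.
Qed.

Definition t2m (t : Tn 8 R) : M2 :=
  match t with (a,(b,(c,(d,(e,(f,(g,(h,_)))))))) => mkM2 (a,b) (c,d) (e,f) (g,h) end.
Definition m2t (A : M2) : Tn 8 R :=
  (fst (m11 A), (snd (m11 A), (fst (m12 A), (snd (m12 A), (fst (m21 A), (snd (m21 A), (fst (m22 A), (snd (m22 A), tt)))))))).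
Lemma t2m_m2t A : t2m (m2t A) = A.
Proof. destruct A as [[] [] [] []]; reflexivity. Qed.

Definition boxa : Tn 8 R := (-1,(-1,(-1,(-1,(-1,(-1,(-1,(-1,tt)))))))).
Definition boxb : Tn 8 R := (1,(1,(1,(1,(1,(1,(1,(1,tt)))))))).

Lemma abs_le1 x : Rabs x <= 1 -> -1 <= x /\ x <= 1.
Proof. unfold Rabs; destruct Rcase_abs; lra. Qed.

Lemma m2t_box A : HS A <= 1 -> bounded_n 8 boxa boxb (m2t A).
Proof.
  intro h. destruct (Cnorm_entry_le A) as [h1 [h2 [h3 h4]]].
  destruct (parts_le_Cnorm (m11 A)); destruct (parts_le_Cnorm (m12 A));
  destruct (parts_le_Cnorm (m21 A)); destruct (parts_le_Cnorm (m22 A)).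
  unfold m2t, boxa, boxb; simpl. repeat split; try (apply abs_le1; lra); apply abs_le1; lra.
Qed.

Lemma close_HS e x t : close_n 8 e x t -> HS (Msub (t2m x) (t2m t)) <= 3 * e.
Proof.
  destruct x as [x1 [x2 [x3 [x4 [x5 [x6 [x7 [x8 []]]]]]]]].
  destruct t as [t1 [t2 [t3 [t4 [t5 [t6 [t7 [t8 []]]]]]]]].
  simpl. intros [h1 [h2 [h3 [h4 [h5 [h6 [h7 [h8 _]]]]]]]].
  assert (he : 0 <= e) by (pose proof (Rabs_pos (x1 - t1)); lra).
  unfold HS, HS2, Msub, Madd, Mopp, Mscale, Cnorm2, Cmul, Cadd; simpl.
  apply sqrt_le_sq. lra.
  assert (forall u, Rabs u < e -> u * u <= e * e).
  { intros u hu. pose proof (Rsqr_abs u). unfold Rsqr in H. rewrite H. pose proof (Rabs_pos u). nra. }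
  pose proof (H _ h1); pose proof (H _ h2); pose proof (H _ h3); pose proof (H _ h4);
  pose proof (H _ h5); pose proof (H _ h6); pose proof (H _ h7); pose proof (H _ h8).
  unfold Rminus in *. nra.
Qed.

Lemma fold_min_le (l : list R) x : In x l -> fold_right Rmin 1 l <= x.
Proof. induction l; simpl; intros ht. contradiction.
  destruct ht as [<-|ht]. apply Rmin_l. eapply Rle_trans. apply Rmin_r. auto. Qed.

Lemma N_lower N (hN : is_norm_M2 N) : exists c, 0 < c /\ forall A, HS A <= c * N A.
Proof.
  destruct (N_upper N hN) as [L [hL hLA]].
  assert (h6L : 0 < 6 * L) by lra. assert (h8 : 0 < 1/8) by lra.
  set (delta := fun t : Tn 8 R =>
     match Rlt_dec 0 (N (t2m t)) with
     | left h => mkposreal (N (t2m t) / (6 * L)) (Rdiv_lt_0_compat _ _ h h6L)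
     | right _ => mkposreal (1/8) h8 end).
  destruct (NNPP _ (compactness_list 8 boxa boxb delta)) as [l hl].
  set (g := fun t : Tn 8 R => match Rlt_dec 0 (N (t2m t)) with left _ => N (t2m t) / 2 | right _ => 1 end).
  set (m := fold_right Rmin 1 (map g l)).
  assert (hg : forall t, 0 < g t) by (intro t; unfold g; destruct Rlt_dec; lra).
  assert (hm : 0 < m).
  { unfold m. clear hl. induction l; simpl. lra. apply Rmin_pos; auto. }
  assert (hmt : forall t, In t l -> m <= g t).
  { intros t ht. unfold m. apply fold_min_le. apply in_map; auto. }
  assert (hunit : forall A, HS A = 1 -> m <= N A).
  { intros A hA. destruct (hl (m2t A) (m2t_box A ltac:(lra))) as [t [ht [_ hc]]].
    pose proof (close_HS _ _ _ hc) as hcl. rewrite t2m_m2t in hcl.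
    specialize (hmt t ht). unfold g, delta in *. destruct Rlt_dec as [hp|hp]; simpl in hcl.
    - pose proof (N_sub_tri N hN (t2m t) A M0).
      replace (Msub (t2m t) M0) with (t2m t) in H by meq. replace (Msub A M0) with A in H by meq.
      pose proof (hLA (Msub (t2m t) A)). rewrite HS_sub_sym in H0.
      assert (L * HS (Msub A (t2m t)) <= N (t2m t) / 2).
      { assert (L * HS (Msub A (t2m t)) <= L * (3 * (N (t2m t) / (6 * L)))) by (apply Rmult_le_compat_l; lra).
        replace (L * (3 * (N (t2m t) / (6 * L)))) with (N (t2m t) / 2) in H1 by (field; lra). lra. }
      lra.
    - assert (N (t2m t) = 0) by (pose proof (N_nonneg N hN (t2m t)); lra).
      apply (N_zero N hN) in H. rewrite H in hcl.
      replace (Msub A M0) with A in hcl by meq. lra. }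
  exists (1/m). split. apply Rdiv_lt_0_compat; lra.
  intro A. destruct (Req_dec (HS A) 0) as [e|ne].
  - rewrite e. pose proof (N_nonneg N hN A). apply Rmult_le_pos; auto. left; apply Rdiv_lt_0_compat; lra.
  - pose proof (HS_nonneg A). set (h := HS A) in *.
    assert (HS (Mscale (/ h, 0) A) = 1). { rewrite HS_scale, Cnorm_real, Rabs_right. fold h. field. lra.
      apply Rle_ge; left; apply Rinv_0_lt_compat; lra. }
    specialize (hunit _ H0). rewrite (N_scale N hN), Cnorm_real, Rabs_right in hunit by (apply Rle_ge; left; apply Rinv_0_lt_compat; lra).
    apply Rmult_le_reg_l with m; auto. replace (m * (1 / m * N A)) with (N A) by (field; lra).
    apply Rmult_le_reg_l with (/ h). apply Rinv_0_lt_compat; lra.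
    replace (/ h * (m * h)) with m by (field; lra). lra.
Qed.

Definition fchi {S} (f : S -> C) (chi : S -> R) : S -> C := fun s => Cmul (f s) (cr (chi s)).

Lemma l1_cs {S} (f : S -> C) : is_l1 f -> csummable f.
Proof. intro h; exact h. Qed.
Lemma cs_l1 {S} (f : S -> C) : csummable f -> is_l1 f.
Proof. intro h; exact h. Qed.
Lemma l1norm_Ssup {S} (f : S -> C) : l1norm f = Ssup (fun s => Cnorm (f s)).
Proof. reflexivity. Qed.

Lemma chi_le1 (c : R) : (c = 0 \/ c = 1) -> Cnorm (cr c) <= 1.
Proof. intros [->| ->]; unfold cr; rewrite Cnorm_real; rewrite ?Rabs_R0, ?Rabs_R1; lra. Qed.

Lemma fchi_cs {S} (f : S -> C) chi : (forall x, chi x = 0 \/ chi x = 1) -> csummable f -> csummable (fchi f chi).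
Proof. intros h hf. apply (csummable_le _ (fun s => Cnorm (f s))); auto. intro i. unfold fchi.
  rewrite Cnorm_mul. pose proof (chi_le1 _ (h i)). pose proof (Cnorm_nonneg (f i)).
  pose proof (Cnorm_nonneg (cr (chi i))). nra. Qed.

Lemma char_conv {S} (op : S -> S -> S) (chi : S -> R) (f g : S -> C) :
  (forall x, chi x = 0 \/ chi x = 1) -> (forall x y, chi (op x y) = chi x * chi y) ->
  csummable f -> csummable g ->
  usum (fchi (conv op f g) chi) = Cmul (usum (fchi f chi)) (usum (fchi g chi)).
Proof.
  intros h01 hmul hf hg.
  set (a := fchi f chi). set (b := fchi g chi).
  assert (ha : csummable a) by (apply fchi_cs; auto). assert (hb : csummable b) by (apply fchi_cs; auto).
  destruct (has_sum_prod a b ha hb) as [hF sF].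
  destruct (has_sum_prod f g hf hg) as [hF0 _].
  set (F := fun p : S * S => Cmul (a (fst p)) (b (snd p))) in *.
  set (F0 := fun p : S * S => Cmul (f (fst p)) (g (snd p))) in *.
  set (pi := fun p : S * S => op (fst p) (snd p)).
  pose proof (fiber_sum pi F hF) as hfs.
  assert (E : (fun s => usum (fib pi F s)) = fchi (conv op f g) chi).
  { apply functional_extensionality. intro s.
    assert (E2 : fib pi F s = fun p => Cmul (cr (chi s)) (fib pi F0 s p)).
    { apply functional_extensionality. intros [x y]. unfold fib, pi, F, F0, a, b, fchi; simpl.
      destruct excluded_middle_informative as [e|ne].
      - subst s. rewrite hmul. unfold cr. apply Ceq; simpl; ring.
      - unfold C0, cr; apply Ceq; simpl; ring. }
    rewrite E2. unfold fchi.
    rewrite (usum_eq _ _ (has_sum_scale (cr (chi s)) _ _ (usum_spec _ (csummable_fib pi F0 s hF0)))).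
    unfold conv. replace (fun p : S * S => if excluded_middle_informative (op (fst p) (snd p) = s) then Cmul (f (fst p)) (g (snd p)) else C0)
      with (fib pi F0 s) by reflexivity.
    ring. }
  rewrite E in hfs. rewrite (usum_eq _ _ hfs). apply usum_eq. auto.
Qed.


Lemma rsum_filter_zero {I} (g : I -> R) (p : I -> bool) l :
  (forall i, In i l -> p i = false -> g i = 0) -> rsum_list g l = rsum_list g (filter p l).
Proof. induction l; simpl; intros h; auto. destruct (p a) eqn:E; simpl.
  - rewrite IHl; auto. - rewrite (h a), IHl; auto. ring. Qed.

Definition inb {I} (m : list I) (x : I) : bool := if in_dec deq x m then true else false.

Lemma finite_bound {I} (g : I -> C) m l : NoDup m -> NoDup l -> (forall s, ~ In s m -> g s = C0) ->
  rsum_list (fun s => Cnorm (g s)) l <= rsum_list (fun s => Cnorm (g s)) m.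
Proof.
  intros hm hl hz. rewrite (rsum_filter_zero _ (inb m)).
  - apply rsum_incl; auto. apply NoDup_filter; auto.
    intros x hx. apply filter_In in hx. unfold inb in hx. destruct in_dec; intuition congruence.
    intros; apply Cnorm_nonneg.
  - intros i _ hp. unfold inb in hp. destruct in_dec; try congruence. rewrite hz; auto. apply Cnorm_C0.
Qed.

Lemma finite_l1 {I} (g : I -> C) m : NoDup m -> (forall s, ~ In s m -> g s = C0) -> is_l1 g.
Proof. intros hm hz. exists (rsum_list (fun s => Cnorm (g s)) m). intros l hl. apply finite_bound; auto. Qed.

Definition ed {S} (s : S) : S -> C := fun x => if excluded_middle_informative (x = s) then C1 else C0.

Lemma ed_l1 {S} (s : S) : is_l1 (ed s).
Proof. apply (finite_l1 _ [s]). repeat constructor; auto. intros x hx. unfold ed.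
  destruct excluded_middle_informative; auto. subst; exfalso; apply hx; left; auto. Qed.

Lemma ed_norm {S} (s : S) : l1norm (ed s) = 1.
Proof.
  rewrite l1norm_Ssup. apply Rle_antisym.
  - apply Ssup_le. apply ed_l1. intros l hl. eapply Rle_trans. apply (finite_bound _ [s]); auto.
    repeat constructor; auto. intros x hx. unfold ed. destruct excluded_middle_informative; auto.
    subst; exfalso; apply hx; left; auto.
    simpl. unfold ed. destruct excluded_middle_informative; try congruence. rewrite Cnorm_C1. lra.
  - pose proof (Ssup_ge (fun x => Cnorm (ed s x)) [s] (ed_l1 s)). simpl in H.
    unfold ed at 1 in H. destruct excluded_middle_informative; try congruence. rewrite Cnorm_C1 in H.
    assert (NoDup [s]) by (repeat constructor; auto). specialize (H H0). lra.
Qed.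

Lemma conv_ed {S} (op : S -> S -> S) (x y : S) : conv op (ed x) (ed y) = ed (op x y).
Proof.
  apply functional_extensionality. intro s. unfold conv.
  set (F := fun p : S * S => if excluded_middle_informative (op (fst p) (snd p) = s) then Cmul (ed x (fst p)) (ed y (snd p)) else C0).
  assert (hz : forall p, ~ In p [(x,y)] -> F p = C0).
  { intros [p q] hp. unfold F, ed; simpl. destruct excluded_middle_informative; auto.
    destruct (excluded_middle_informative (p = x)); destruct (excluded_middle_informative (q = y)); subst;
      try (exfalso; apply hp; left; reflexivity); unfold C0, C1; apply Ceq; simpl; ring. }
  rewrite (usum_eq _ _ (has_sum_finite F [(x,y)] ltac:(repeat constructor; auto) hz)).
  simpl. unfold F, ed; simpl.
  destruct (excluded_middle_informative (x = x)); try congruence.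
  destruct (excluded_middle_informative (y = y)); try congruence.
  destruct (excluded_middle_informative (op x y = s)); destruct (excluded_middle_informative (s = op x y));
    subst; try congruence; unfold C0, C1; apply Ceq; simpl; ring.
Qed.

Definition msum {I} (g : I -> M2) (l : list I) : M2 := fold_right (fun s acc => Madd (g s) acc) M0 l.

Definition psi {S} (P : M2) (x1 x2 : S -> R) (h : S -> C) : M2 :=
  Madd (Mscale (usum (fchi h x1)) P) (Mscale (usum (fchi h x2)) (Msub MI P)).

Lemma usum_fchi_add {S} (f g : S -> C) chi : (forall x, chi x = 0 \/ chi x = 1) -> is_l1 f -> is_l1 g ->
  usum (fchi (fadd f g) chi) = Cadd (usum (fchi f chi)) (usum (fchi g chi)).
Proof.
  intros h hf hg. apply usum_eq.
  replace (fchi (fadd f g) chi) with (fun s => Cadd (fchi f chi s) (fchi g chi s)).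
  apply has_sum_add; apply usum_spec; apply fchi_cs; auto.
  apply functional_extensionality; intro s; unfold fchi, fadd; ring.
Qed.

Lemma usum_fchi_scale {S} (c : C) (f : S -> C) chi : (forall x, chi x = 0 \/ chi x = 1) -> is_l1 f ->
  usum (fchi (fscale c f) chi) = Cmul c (usum (fchi f chi)).
Proof.
  intros h hf. apply usum_eq.
  replace (fchi (fscale c f) chi) with (fun s => Cmul c (fchi f chi s)).
  apply has_sum_scale; apply usum_spec; apply fchi_cs; auto.
  apply functional_extensionality; intro s; unfold fchi, fscale; ring.
Qed.

Lemma usum_fchi_bound {S} (f : S -> C) chi : (forall x, chi x = 0 \/ chi x = 1) -> is_l1 f ->
  Cnorm (usum (fchi f chi)) <= l1norm f.
Proof.
  intros h hf. eapply Rle_trans. apply usum_bound. apply fchi_cs; auto.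
  rewrite l1norm_Ssup. apply Ssup_le. apply fchi_cs; auto.
  intros l hl. eapply Rle_trans. apply (rsum_le _ (fun s => Cnorm (f s))).
  intro i. unfold fchi. rewrite Cnorm_mul. pose proof (chi_le1 _ (h i)). pose proof (Cnorm_nonneg (f i)).
  pose proof (Cnorm_nonneg (cr (chi i))). nra.
  apply Ssup_ge; auto.
Qed.

Lemma psi_bl {S} N (hN : is_norm_M2 N) P (x1 x2 : S -> R) :
  (forall x, x1 x = 0 \/ x1 x = 1) -> (forall x, x2 x = 0 \/ x2 x = 1) ->
  bounded_linear N (psi P x1 x2).
Proof.
  intros h1 h2. split; [|split].
  - intros f g hf hg. unfold psi. rewrite !usum_fchi_add; auto. meq.
  - intros c f hf. unfold psi. rewrite !usum_fchi_scale; auto. meq.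
  - exists (N P + N (Msub MI P)). intros f hf. unfold psi.
    eapply Rle_trans. apply N_tri; auto. rewrite !(N_scale N hN).
    pose proof (usum_fchi_bound f x1 h1 hf). pose proof (usum_fchi_bound f x2 h2 hf).
    pose proof (N_nonneg N hN P). pose proof (N_nonneg N hN (Msub MI P)).
    pose proof (Cnorm_nonneg (usum (fchi f x1))). pose proof (Cnorm_nonneg (usum (fchi f x2))).
    nra.
Qed.

Lemma psi_mul {S} (op : S -> S -> S) P (x1 x2 : S -> R) :
  Mmul P P = P ->
  (forall x, x1 x = 0 \/ x1 x = 1) -> (forall x, x2 x = 0 \/ x2 x = 1) ->
  (forall x y, x1 (op x y) = x1 x * x1 y) -> (forall x y, x2 (op x y) = x2 x * x2 y) ->
  multiplicative_map op (psi P x1 x2).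
Proof.
  intros hP h1 h2 m1 m2 f g hf hg. unfold psi.
  rewrite !char_conv; auto.
  set (a1 := usum (fchi f x1)). set (a2 := usum (fchi f x2)).
  set (b1 := usum (fchi g x1)). set (b2 := usum (fchi g x2)).
  transitivity (Madd (Madd (Mscale (Cmul a1 b1) (Mmul P P)) (Mscale (Cmul a1 b2) (Msub P (Mmul P P))))
                     (Madd (Mscale (Cmul a2 b1) (Msub P (Mmul P P))) (Mscale (Cmul a2 b2) (Madd (Msub MI (Madd P P)) (Mmul P P))))).
  - rewrite hP. meq.
  - meq.
Qed.

Lemma N_msum {I} N (hN : is_norm_M2 N) (g : I -> M2) l : N (msum g l) <= rsum_list (fun s => N (g s)) l.
Proof. induction l; simpl. rewrite N_M0; auto; lra. eapply Rle_trans. apply N_tri; auto. lra. Qed.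

Lemma msum_sub {I} (g h : I -> M2) l : msum (fun s => Msub (g s) (h s)) l = Msub (msum g l) (msum h l).
Proof. induction l; simpl. meq. rewrite IHl. meq. Qed.

Definition trunc {S} (f : S -> C) (m : list S) : S -> C := fun s => if excluded_middle_informative (In s m) then f s else C0.

Lemma trunc_l1 {S} (f : S -> C) m : NoDup m -> is_l1 (trunc f m).
Proof. intro h. apply (finite_l1 _ m h). intros s hs. unfold trunc. destruct excluded_middle_informative; tauto. Qed.

Lemma T_zero {S} N (T : (S -> C) -> M2) : bounded_linear N T -> T (fun _ => C0) = M0.
Proof.
  intros [_ [hsc _]]. assert (hz : is_l1 (fun _ : S => C0)).
  { exists 0. intros l _. rewrite rsum_zero. lra. intros; apply Cnorm_C0. }
  pose proof (hsc C0 (fun _ => C0) hz). unfold fscale in H.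
  replace (fun _ : S => Cmul C0 C0) with (fun _ : S => C0) in H by (apply functional_extensionality; intro; ring).
  rewrite H. meq.
Qed.

Lemma T_trunc {S} N (T : (S -> C) -> M2) (f : S -> C) : bounded_linear N T ->
  forall m, NoDup m -> T (trunc f m) = msum (fun s => Mscale (f s) (T (ed s))) m.
Proof.
  intros hT m hm. induction hm; simpl.
  - replace (trunc f []) with (fun _ : S => C0). apply (T_zero N); auto.
    apply functional_extensionality; intro s; unfold trunc; destruct excluded_middle_informative; simpl in *; tauto.
  - destruct hT as [hadd [hsc hb]].
    replace (trunc f (x :: l)) with (fadd (fscale (f x) (ed x)) (trunc f l)).
    + assert (hl1 : is_l1 (fscale (f x) (ed x))).
      { unfold fscale. apply (finite_l1 _ [x]). repeat constructor; auto.
        intros s hs. unfold ed. destruct excluded_middle_informative. subst; exfalso; apply hs; left; auto. ring. }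
      rewrite (hadd _ _ hl1 (trunc_l1 f l hm)), (hsc (f x) (ed x) (ed_l1 x)), IHhm. reflexivity.
    + apply functional_extensionality; intro s. unfold fadd, fscale, trunc, ed.
      destruct (excluded_middle_informative (s = x)) as [e|ne].
      * subst. destruct (excluded_middle_informative (In x l)); try contradiction.
        destruct (excluded_middle_informative (In x (x :: l))). unfold C0, C1; apply Ceq; simpl; ring.
        exfalso; apply n0; left; auto.
      * destruct (excluded_middle_informative (In s l)); destruct (excluded_middle_informative (In s (x :: l)));
          simpl in *; try tauto; try (exfalso; intuition congruence); unfold C0; apply Ceq; simpl; ring.
Qed.

Lemma msum_phi {S} (f : S -> C) P (x1 x2 : S -> R) l :
  msum (fun s => Mscale (f s) (Madd (Mscale (cr (x1 s)) P) (Mscale (cr (x2 s)) (Msub MI P)))) l =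
  Madd (Mscale (csum_list (fchi f x1) l) P) (Mscale (csum_list (fchi f x2) l) (Msub MI P)).
Proof. induction l; simpl. meq. rewrite IHl. unfold fchi. meq. Qed.

Lemma rsum_ldiff_zero {I} (g : I -> R) l m : (forall i, In i m -> g i = 0) -> rsum_list g l = rsum_list g (ldiff l m).
Proof. intro h. unfold ldiff. apply rsum_filter_zero. intros i _ hp. destruct in_dec; try congruence. auto. Qed.

Lemma psi_close {S} N (hN : is_norm_M2 N) (T : (S -> C) -> M2) (hT : bounded_linear N T) P (x1 x2 : S -> R)
  (h1 : forall x, x1 x = 0 \/ x1 x = 1) (h2 : forall x, x2 x = 0 \/ x2 x = 1) (be : R) :
  0 <= be ->
  (forall s, N (Msub (T (ed s)) (Madd (Mscale (cr (x1 s)) P) (Mscale (cr (x2 s)) (Msub MI P)))) <= be) ->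
  forall f, is_l1 f -> N (Msub (T f) (psi P x1 x2 f)) <= be * l1norm f.
Proof.
  intros hbe hphi f hf.
  pose proof hT as [hadd [hsc [K hK]]].
  set (K' := Rmax K 0).
  assert (hK' : forall g, is_l1 g -> N (T g) <= K' * l1norm g).
  { intros g hg. eapply Rle_trans. apply hK; auto. apply Rmult_le_compat_r. rewrite l1norm_Ssup; apply Ssup_nonneg; auto.
    apply Rmax_l. }
  assert (hK0 : 0 <= K') by apply Rmax_r.
  set (Q := Msub MI P).
  pose proof (N_nonneg N hN P). pose proof (N_nonneg N hN Q).
  apply le_epsilon. intros eps he.
  set (eta := eps / (K' + N P + N Q + 1)).
  assert (het : 0 < eta) by (unfold eta; apply Rdiv_lt_0_compat; lra).
  assert (hetb : eta * (K' + N P + N Q) <= eps).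
  { unfold eta. apply Rmult_le_reg_r with (K' + N P + N Q + 1). lra.
    replace (eps / (K' + N P + N Q + 1) * (K' + N P + N Q) * (K' + N P + N Q + 1)) with (eps * (K' + N P + N Q)) by (field; lra).
    nra. }
  destruct (Ssup_approx _ eta hf het) as [la [hla ta]].
  destruct (usum_spec (fchi f x1) (fchi_cs f x1 h1 hf) eta het) as [lb [hlb sb]].
  destruct (usum_spec (fchi f x2) (fchi_cs f x2 h2 hf) eta het) as [lc [hlc sc]].
  set (l := lunion (lunion la lb) lc).
  assert (hl : NoDup l) by apply lunion_NoDup.
  specialize (sb l hl (fun x hx => lunion_l _ _ x (lunion_r _ _ x hx))).
  specialize (sc l hl (lunion_r _ _)).
  assert (hal : rsum_list (fun s => Cnorm (f s)) la <= rsum_list (fun s => Cnorm (f s)) l).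
  { apply rsum_incl; auto. intros x hx. apply lunion_l. apply lunion_l. auto. intros; apply Cnorm_nonneg. }
  set (rest := fun s => if excluded_middle_informative (In s l) then C0 else f s).
  assert (hrest : is_l1 rest).
  { apply (bnd_le _ (fun s => Cnorm (f s))); auto. intro i. unfold rest. destruct excluded_middle_informative.
    rewrite Cnorm_C0; apply Cnorm_nonneg. lra. }
  assert (hrestn : l1norm rest <= eta).
  { rewrite l1norm_Ssup. apply Ssup_le; auto. intros l' hl'.
    rewrite (rsum_ldiff_zero _ l' l).
    2:{ intros i hi. unfold rest. destruct excluded_middle_informative; try contradiction. apply Cnorm_C0. }
    rewrite (rsum_ext _ (fun s => Cnorm (f s)) (ldiff l' l)).
    2:{ intros i hi. apply ldiff_In in hi. unfold rest. destruct excluded_middle_informative; tauto. }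
    assert (hdis : forall x, In x (ldiff l' l) -> ~ In x l) by (intros x hx; apply ldiff_In in hx; tauto).
    pose proof (tail_bound (fun s => Cnorm (f s)) l (ldiff l' l) hf (fun _ => Cnorm_nonneg _) hl (ldiff_NoDup _ _ hl') hdis) as htb.
    lra. }
  assert (hsplit : f = fadd (trunc f l) rest).
  { apply functional_extensionality; intro s. unfold fadd, trunc, rest. destruct excluded_middle_informative; unfold C0; apply Ceq; simpl; ring. }
  assert (hTf : T f = Madd (msum (fun s => Mscale (f s) (T (ed s))) l) (T rest)).
  { rewrite hsplit at 1. rewrite hadd; auto. rewrite (T_trunc N T f hT l hl). reflexivity. apply trunc_l1; auto. }
  set (phi := fun s => Madd (Mscale (cr (x1 s)) P) (Mscale (cr (x2 s)) Q)).
  assert (hdec : Msub (T f) (psi P x1 x2 f) =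
     Madd (Madd (T rest) (msum (fun s => Mscale (f s) (Msub (T (ed s)) (phi s))) l))
          (Madd (Mscale (Csub (csum_list (fchi f x1) l) (usum (fchi f x1))) P)
                (Mscale (Csub (csum_list (fchi f x2) l) (usum (fchi f x2))) Q))).
  { rewrite hTf. replace (msum (fun s => Mscale (f s) (Msub (T (ed s)) (phi s))) l) with
      (Msub (msum (fun s => Mscale (f s) (T (ed s))) l) (msum (fun s => Mscale (f s) (phi s)) l)).
    unfold phi, Q. rewrite msum_phi. unfold psi. meq.
    rewrite <- msum_sub. f_equal. apply functional_extensionality; intro s. meq. }
  rewrite hdec.
  eapply Rle_trans. apply N_tri; auto. eapply Rle_trans. apply Rplus_le_compat; apply N_tri; auto.
  rewrite !(N_scale N hN).
  pose proof (hK' rest hrest).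
  assert (N (msum (fun s => Mscale (f s) (Msub (T (ed s)) (phi s))) l) <= be * l1norm f).
  { eapply Rle_trans. apply N_msum; auto. rewrite l1norm_Ssup.
    eapply Rle_trans. apply (rsum_le _ (fun s => be * Cnorm (f s))).
    intro i. rewrite (N_scale N hN). rewrite Rmult_comm. apply Rmult_le_compat_r. apply Cnorm_nonneg. apply hphi.
    rewrite rsum_scale. apply Rmult_le_compat_l; auto. apply Ssup_ge; auto. }
  assert (K' * l1norm rest <= K' * eta) by (apply Rmult_le_compat_l; auto).
  assert (Cnorm (Csub (csum_list (fchi f x1) l) (usum (fchi f x1))) * N P <= eta * N P) by (apply Rmult_le_compat_r; lra).
  assert (Cnorm (Csub (csum_list (fchi f x2) l) (usum (fchi f x2))) * N Q <= eta * N Q) by (apply Rmult_le_compat_r; lra).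
  nra.
Qed.

Lemma part2 (S : Type) (op : S -> S -> S) (HSL : is_semilattice S op) :
  forall N : M2 -> R, is_norm_M2 N -> uniformly_AMNM_l1_M2 op N.
Proof.
  intros N hN eps he.
  destruct (N_upper N hN) as [L [hL hLA]]. destruct (N_lower N hN) as [c [hc hcA]].
  set (dl := Rmin (0.029 / c) (eps / (12 * c * L))).
  assert (hdl : 0 < dl) by (unfold dl; apply Rmin_pos; apply Rdiv_lt_0_compat; nra).
  assert (hdl1 : c * dl <= 0.029).
  { unfold dl. pose proof (Rmin_l (0.029 / c) (eps / (12 * c * L))).
    apply Rmult_le_compat_l with (r := c) in H; [|lra]. replace (c * (0.029 / c)) with 0.029 in H by (field; lra). lra. }
  assert (hdl2 : L * (12 * (c * dl)) <= eps).
  { unfold dl. pose proof (Rmin_r (0.029 / c) (eps / (12 * c * L))).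
    apply Rmult_le_compat_l with (r := 12 * c * L) in H; [|nra].
    replace (12 * c * L * (eps / (12 * c * L))) with eps in H by (field; lra). lra. }
  exists dl. split; auto. intros T hT hdef.
  set (th := fun s => T (ed s)).
  assert (herr : forall e f, HS (Msub (Mmul (th e) (th f)) (th (op e f))) <= c * dl).
  { intros e f. eapply Rle_trans. apply hcA. apply Rmult_le_compat_l. lra.
    unfold th. rewrite (N_sub_sym N hN), <- conv_ed. apply hdef; try apply ed_l1; rewrite ed_norm; lra. }
  destruct (part1_chi S op HSL (c * dl) th ltac:(nra) ltac:(lra) herr) as [P [x1 [x2 [hP [h01 [hm hb]]]]]].
  exists (psi P x1 x2). split; [|split].
  - apply psi_bl; auto; intro x; apply h01.
  - apply psi_mul; auto; intros; apply h01 || apply hm.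
  - intros f hf hf1. eapply Rle_trans. apply (psi_close N hN T hT P x1 x2) with (be := L * (12 * (c * dl))); auto.
    + intro x; apply h01.
    + intro x; apply h01.
    + assert (0 <= c * dl) by (apply Rmult_le_pos; lra). apply Rmult_le_pos; lra.
    + intro s. eapply Rle_trans. apply hLA. apply Rmult_le_compat_l. lra. apply hb.
    + pose proof (Ssup_nonneg (fun s => Cnorm (f s)) hf). rewrite l1norm_Ssup in hf1.
      rewrite l1norm_Ssup. nra.
Qed.

Theorem theoremt (S : Type) (op : S -> S -> S) (HS_semilattice : is_semilattice S op) :
  (forall (delta : R) (theta : S -> M2),
     0 <= delta -> delta < 0.03 ->
     (forall e f, HS (Msub (Mmul (theta e) (theta f)) (theta (op e f))) <= delta) ->
     exists phi : S -> M2,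
       (forall e f, phi (op e f) = Mmul (phi e) (phi f)) /\
       (forall x, Mmul (phi x) (phi x) = phi x) /\
       (forall x y, Mmul (phi x) (phi y) = Mmul (phi y) (phi x)) /\
       (forall x, HS (Msub (theta x) (phi x)) <= 12 * delta))
  /\
  (forall N : M2 -> R, is_norm_M2 N -> uniformly_AMNM_l1_M2 op N).
Proof.
  split.
  - intros delta theta h0 h1 herr. apply part1; auto.
  - apply part2; auto.
Qed.
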